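(* Let $K\geqslant1$ and $f\in\mathrm{HQR}_K(\mathbb{U},\mathbb{S})$ with $f(0)=0$. Then $$|f(z)|\leqslant\frac{4}{\pi}K\operatorname{artanh}|z|\quad\text{for all } z\in\mathbb{U},$$ and this inequality is sharp for each point $z\in\mathbb{U}$ (for every $z\in\mathbb{U}$ there is $g\in\mathrm{HQR}_K(\mathbb{U},\mathbb{S})$ with $g(0)=0$ and $|g(z)|=\frac{4}{\pi}K\operatorname{artanh}|z|$).
   Context: $\mathbb{U}=\{z\in\mathbb{C}:|z|<1\}$, $\mathbb{S}=\{z\in\mathbb{C}:-1<\operatorname{Re} z<1\}$. For domains $D,G\subset\mathbb{C}$, $\mathrm{HQR}_K(D,G)$ denotes the class of complex-valued harmonic $C^1$ maps $f:D\to G$ that are sense-preserving $K$-quasiregular, i.e. $|f_z(z)|>|f_{\bar z}(z)|$ and $\frac{|f_z(z)|+|f_{\bar z}(z)|}{|f_z(z)|-|f_{\bar z}(z)|}\leqslant K$ for all $z\in D$. *)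

(* Defs.v *)
From Stdlib Require Import Reals.
From Coquelicot Require Import Coquelicot.
Open Scope R_scope.

Definition unit_disk (z : C) : Prop := Cmod z < 1.
Definition strip (z : C) : Prop := -1 < fst z < 1.

Definition dx (h : C -> R) (p : C) : R := Derive (fun t => h (t, snd p)) (fst p).
Definition dy (h : C -> R) (p : C) : R := Derive (fun t => h (fst p, t)) (snd p).

Definition C1_on (D : C -> Prop) (h : C -> R) : Prop :=
  forall p, D p ->
    ex_derive (fun t => h (t, snd p)) (fst p) /\
    ex_derive (fun t => h (fst p, t)) (snd p) /\
    continuous h p /\ continuous (dx h) p /\ continuous (dy h) p.

Definition C2_on (D : C -> Prop) (h : C -> R) : Prop :=
  C1_on D h /\ C1_on D (dx h) /\ C1_on D (dy h).

Definition harmonic_on (D : C -> Prop) (h : C -> R) : Prop :=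
  C2_on D h /\ forall p, D p -> dx (dx h) p + dy (dy h) p = 0.

Definition re_part (f : C -> C) : C -> R := fun p => fst (f p).
Definition im_part (f : C -> C) : C -> R := fun p => snd (f p).

(* f_z = (f_x - i f_y)/2 and f_{\bar z} = (f_x + i f_y)/2, f = u + i v *)
Definition f_z (f : C -> C) (p : C) : C :=
  let u := re_part f in let v := im_part f in
  ((dx u p + dy v p) / 2, (dx v p - dy u p) / 2).
Definition f_zbar (f : C -> C) (p : C) : C :=
  let u := re_part f in let v := im_part f in
  ((dx u p - dy v p) / 2, (dx v p + dy u p) / 2).

Definition HQR (K : R) (D G : C -> Prop) (f : C -> C) : Prop :=
  (forall z, D z -> G (f z)) /\
  harmonic_on D (re_part f) /\ harmonic_on D (im_part f) /\
  C1_on D (re_part f) /\ C1_on D (im_part f) /\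
  (forall z, D z ->
     Cmod (f_zbar f z) < Cmod (f_z f z) /\
     (Cmod (f_z f z) + Cmod (f_zbar f z)) / (Cmod (f_z f z) - Cmod (f_zbar f z)) <= K).

Definition artanh (x : R) : R := ln ((1 + x) / (1 - x)) / 2.

(* Main.v *)
Require Import Defs.
From Stdlib Require Import Reals Lra.
From Coquelicot Require Import Coquelicot.
Open Scope R_scope.

Lemma deriv_small (f : R -> R) y l (eps : posreal) :
  derivable_pt_lim f y l ->
  exists d : posreal, forall v, Rabs (v - y) < d ->
    Rabs (f v - f y - l * (v - y)) <= eps * Rabs (v - y).
Proof.
  intros H. destruct (H eps (cond_pos eps)) as [d Hd].
  exists d. intros v Hv.
  destruct (Req_dec v y) as [->|Hne].
  { replace (f y - f y - l * (y - y)) with 0 by ring. rewrite Rabs_R0, Rminus_diag, Rabs_R0. lra. }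
  assert (Hh : v - y <> 0) by lra.
  specialize (Hd (v - y) Hh Hv). replace (y + (v - y)) with v in Hd by ring.
  replace (f v - f y - l * (v - y)) with (((f v - f y) / (v - y) - l) * (v - y)) by (field; auto).
  rewrite Rabs_mult. apply Rmult_le_compat_r. apply Rabs_pos. lra.
Qed.

Lemma diff_of_partials (f : R -> R -> R) x y :
  locally_2d (fun u v => ex_derive (fun z => f z v) u) x y ->
  continuity_2d_pt (fun u v => Derive (fun z => f z v) u) x y ->
  ex_derive (fun z => f x z) y ->
  differentiable_pt_lim f x y (Derive (fun z => f z y) x) (Derive (fun z => f x z) y).
Proof.
  intros Hloc Hc Hy eps.
  set (e2 := mkposreal (eps/2) ltac:(destruct eps; simpl; lra)).
  destruct (Hc e2) as [d1 Hd1].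
  destruct Hloc as [d2 Hd2].
  apply Derive_correct, is_derive_Reals in Hy.
  destruct (deriv_small _ _ _ e2 Hy) as [d3 Hd3].
  assert (Hd : 0 < Rmin d1 (Rmin d2 d3)).
  { destruct d1, d2, d3; simpl. repeat apply Rmin_pos; lra. }
  exists (mkposreal _ Hd). simpl. intros u v Hu Hv.
  assert (Hu1 : Rabs (u - x) < d1) by (eapply Rlt_le_trans; [exact Hu|apply Rmin_l]).
  assert (Hv1 : Rabs (v - y) < d1) by (eapply Rlt_le_trans; [exact Hv|apply Rmin_l]).
  assert (Hu2 : Rabs (u - x) < d2) by (eapply Rlt_le_trans; [exact Hu|eapply Rle_trans; [apply Rmin_r|apply Rmin_l]]).
  assert (Hv2 : Rabs (v - y) < d2) by (eapply Rlt_le_trans; [exact Hv|eapply Rle_trans; [apply Rmin_r|apply Rmin_l]]).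
  assert (Hv3 : Rabs (v - y) < d3) by (eapply Rlt_le_trans; [exact Hv|eapply Rle_trans; [apply Rmin_r|apply Rmin_r]]).
  assert (HM : exists c, Rmin x u <= c <= Rmax x u /\
     f u v - f x v = Derive (fun z => f z v) c * (u - x)).
  { destruct (MVT_gen (fun z => f z v) x u (fun c => Derive (fun z => f z v) c)) as [c [Hc1 Hc2]].
    - intros c Hcr. apply Derive_correct. apply Hd2; auto.
      apply Rle_lt_trans with (Rabs (u - x)); auto.
      unfold Rmin, Rmax in Hcr; destruct (Rle_dec x u); apply Rabs_le; split; unfold Rabs; destruct (Rcase_abs (u - x)); lra.
    - intros c Hcr.
      assert (Hcx : Rabs (c - x) < d2).
      { apply Rle_lt_trans with (Rabs (u - x)); auto.
        unfold Rmin, Rmax in Hcr; destruct (Rle_dec x u); apply Rabs_le; split; unfold Rabs; destruct (Rcase_abs (u - x)); lra. }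
      specialize (Hd2 c v Hcx Hv2). apply ex_derive_continuous in Hd2.
      apply continuity_pt_filterlim. exact Hd2.
    - exists c; split; auto. }
  destruct HM as [c [Hcr Hcv]].
  assert (Hcx : Rabs (c - x) < d1).
  { apply Rle_lt_trans with (Rabs (u - x)); auto.
    unfold Rmin, Rmax in Hcr; destruct (Rle_dec x u); apply Rabs_le; split; unfold Rabs; destruct (Rcase_abs (u - x)); lra. }
  specialize (Hd1 c v Hcx Hv1). simpl in Hd1.
  specialize (Hd3 v Hv3). simpl in Hd3.
  replace (f u v - f x y - (Derive (fun z => f z y) x * (u - x) + Derive (fun z => f x z) y * (v - y)))
    with ((Derive (fun z => f z v) c - Derive (fun z => f z y) x) * (u - x)
          + (f x v - f x y - Derive (fun z => f x z) y * (v - y))) by lra.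
  eapply Rle_trans. apply Rabs_triang. rewrite Rabs_mult.
  assert (Hm1 : Rabs (u - x) <= Rmax (Rabs (u - x)) (Rabs (v - y))) by apply Rmax_l.
  assert (Hm2 : Rabs (v - y) <= Rmax (Rabs (u - x)) (Rabs (v - y))) by apply Rmax_r.
  assert (0 <= Rabs (u - x)) by apply Rabs_pos.
  assert (0 <= Rabs (v - y)) by apply Rabs_pos.
  assert (Rabs (Derive (fun z => f z v) c - Derive (fun z => f z y) x) * Rabs (u - x) <= eps/2 * Rabs (u - x)).
  { apply Rmult_le_compat_r; auto; lra. }
  destruct eps as [e He]; simpl in *. nra.
Qed.

Lemma Cmod_le_abs (a b : R) : Cmod (a, b) <= Rabs a + Rabs b.
Proof.
  unfold Cmod; simpl.
  assert (Ha := Rabs_pos a). assert (Hb := Rabs_pos b).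
  rewrite <- (sqrt_pow2 (Rabs a + Rabs b)) by lra.
  apply sqrt_le_1_alt. assert (Ea := pow2_abs a). assert (Eb := pow2_abs b). simpl in *. nra.
Qed.

Lemma Cmod_minus_le (a b c d : R) : Cmod (a, b) <= Cmod (c, d) + Rabs (a - c) + Rabs (b - d).
Proof.
  replace (a, b) with (Cplus (c, d) (a - c, b - d)).
  2:{ unfold Cplus; simpl; f_equal; ring. }
  eapply Rle_trans. apply Cmod_triangle. generalize (Cmod_le_abs (a - c) (b - d)). lra.
Qed.

Lemma disk_open2 x y : unit_disk (x, y) -> locally_2d (fun a b => unit_disk (a, b)) x y.
Proof.
  unfold unit_disk; intros H.
  assert (Hd : 0 < (1 - Cmod (x, y)) / 2) by lra.
  exists (mkposreal _ Hd). simpl. intros a b Ha Hb.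
  generalize (Cmod_minus_le a b x y). lra.
Qed.

Lemma disk_open x y : unit_disk (x, y) -> locally (x, y) unit_disk.
Proof.
  intros H. apply disk_open2 in H. apply locally_2d_locally in H.
  eapply filter_imp; [|exact H]. intros [a b]; simpl; auto.
Qed.

Lemma cont2d_of_cont (h : C -> R) x y : continuous h (x, y) ->
  continuity_2d_pt (fun a b => h (a, b)) x y.
Proof.
  intros H. apply continuity_2d_pt_filterlim.
  eapply filterlim_ext; [|exact H]. intros [a b]; reflexivity.
Qed.

Lemma C1_diff (h : C -> R) x y : C1_on unit_disk h -> unit_disk (x, y) ->
  differentiable_pt_lim (fun a b => h (a, b)) x y (dx h (x, y)) (dy h (x, y)).
Proof.
  intros HC Hd.
  destruct (HC _ Hd) as [H1 [H2 [H3 [H4 H5]]]]; simpl in *.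
  apply diff_of_partials.
  - destruct (disk_open2 _ _ Hd) as [e He]. exists e. intros u v Hu Hv.
    destruct (HC _ (He u v Hu Hv)) as [K1 _]; exact K1.
  - apply cont2d_of_cont in H4. exact H4.
  - exact H2.
Qed.

Lemma chain_curve (h : C -> R) (a b : R -> R) t a' b' :
  C1_on unit_disk h -> unit_disk (a t, b t) ->
  is_derive a t a' -> is_derive b t b' ->
  is_derive (fun s => h (a s, b s)) t (dx h (a t, b t) * a' + dy h (a t, b t) * b').
Proof.
  intros HC Hd Ha Hb. apply is_derive_Reals.
  apply (derivable_pt_lim_comp_2d (fun x y => h (x, y))).
  - apply C1_diff; auto.
  - apply is_derive_Reals; auto.
  - apply is_derive_Reals; auto.
Qed.

Definition cont2 (F : R -> R -> R) (r t : R) := continuous (fun z : R * R => F (fst z) (snd z)) (r, t).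

Lemma cont2_comp (h : C -> R) (F G : R -> R -> R) r t :
  cont2 F r t -> cont2 G r t -> continuous h (F r t, G r t) ->
  cont2 (fun a b => h (F a b, G a b)) r t.
Proof.
  intros HF HG Hh. unfold cont2.
  apply (continuous_comp (fun z : R * R => (F (fst z) (snd z), G (fst z) (snd z))) h).
  - apply (continuous_comp_2 (fun z : R*R => F (fst z) (snd z)) (fun z : R*R => G (fst z) (snd z)) (fun a b => (a, b))); auto.
    simpl. apply (continuous_ext (fun x => x)). intros [p q]; reflexivity. intros P HP; exact HP.
  - exact Hh.
Qed.

Lemma cont2_plus F G r t : cont2 F r t -> cont2 G r t -> cont2 (fun a b => F a b + G a b) r t.
Proof. intros. apply (continuous_plus (fun z : R*R => F (fst z) (snd z)) (fun z : R*R => G (fst z) (snd z))); auto. Qed.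
Lemma cont2_mult F G r t : cont2 F r t -> cont2 G r t -> cont2 (fun a b => F a b * G a b) r t.
Proof. intros. apply (continuous_mult (fun z : R*R => F (fst z) (snd z)) (fun z : R*R => G (fst z) (snd z))); auto. Qed.
Lemma cont2_opp F r t : cont2 F r t -> cont2 (fun a b => - F a b) r t.
Proof. intros. apply (continuous_opp (fun z : R*R => F (fst z) (snd z))); auto. Qed.
Lemma cont2_minus F G r t : cont2 F r t -> cont2 G r t -> cont2 (fun a b => F a b - G a b) r t.
Proof. intros. apply cont2_plus; auto. apply cont2_opp; auto. Qed.
Lemma cont2_const c r t : cont2 (fun _ _ => c) r t.
Proof. apply continuous_const. Qed.
Lemma cont2_fst r t : cont2 (fun a _ => a) r t.
Proof. apply continuous_fst. Qed.
Lemma cont2_snd r t : cont2 (fun _ b => b) r t.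
Proof. apply continuous_snd. Qed.
Lemma cont2_f1 (f : R -> R) F r t : cont2 F r t -> continuous f (F r t) -> cont2 (fun a b => f (F a b)) r t.
Proof. intros. apply (continuous_comp (fun z : R*R => F (fst z) (snd z)) f); auto. Qed.
Lemma cont2_inv F r t : cont2 F r t -> F r t <> 0 -> cont2 (fun a b => / F a b) r t.
Proof.
  intros H Hn. apply (cont2_f1 Rinv F r t H).
  apply (ex_derive_continuous (V := R_NormedModule)). auto_derive. auto.
Qed.
Lemma cont2_cos F r t : cont2 F r t -> cont2 (fun a b => cos (F a b)) r t.
Proof. intros H. apply (cont2_f1 cos F r t H). apply (ex_derive_continuous (V := R_NormedModule)). auto_derive. auto. Qed.
Lemma cont2_sin F r t : cont2 F r t -> cont2 (fun a b => sin (F a b)) r t.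
Proof. intros H. apply (cont2_f1 sin F r t H). apply (ex_derive_continuous (V := R_NormedModule)). auto_derive. auto. Qed.
Lemma cont2_pow F n r t : cont2 F r t -> cont2 (fun a b => F a b ^ n) r t.
Proof. intros. induction n; simpl. apply cont2_const. apply cont2_mult; auto. Qed.

Lemma cont2_1d F r t : cont2 F r t -> continuous (fun b => F r b) t.
Proof.
  intros H. unfold cont2 in H.
  apply (continuous_comp (fun b => (r, b)) (fun z : R*R => F (fst z) (snd z))).
  - apply (continuous_comp_2 (fun _ => r) (fun b => b) (fun a b => (a, b))).
    apply continuous_const. apply continuous_id.
    apply (continuous_ext (fun x => x)). intros [p q]; reflexivity. intros P HP; exact HP.
  - exact H.
Qed.
Lemma cont2_1d' F r t : cont2 F r t -> continuous (fun a => F a t) r.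
Proof.
  intros H. unfold cont2 in H.
  apply (continuous_comp (fun a => (a, t)) (fun z : R*R => F (fst z) (snd z))).
  - apply (continuous_comp_2 (fun a => a) (fun _ => t) (fun a b => (a, b))).
    apply continuous_id. apply continuous_const.
    apply (continuous_ext (fun x => x)). intros [p q]; reflexivity. intros P HP; exact HP.
  - exact H.
Qed.

Ltac req := match goal with |- ?a = ?b => change (@eq R a b) end.

Lemma is_derive_eq (f : R -> R) x l l' : is_derive f x l -> l = l' -> is_derive f x l'.
Proof. intros H ->; exact H. Qed.
Lemma is_derive_Rplus (f g : R -> R) x a b : is_derive f x a -> is_derive g x b ->
  is_derive (fun t => f t + g t) x (a + b).
Proof. intros; apply (is_derive_plus f g); auto. Qed.
Lemma is_derive_Rminus (f g : R -> R) x a b : is_derive f x a -> is_derive g x b ->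
  is_derive (fun t => f t - g t) x (a - b).
Proof. intros; apply (is_derive_minus f g); auto. Qed.
Lemma is_derive_Rmult (f g : R -> R) x a b : is_derive f x a -> is_derive g x b ->
  is_derive (fun t => f t * g t) x (a * g x + f x * b).
Proof. intros; apply (is_derive_mult f g); auto. intros; apply Rmult_comm. Qed.
Lemma is_derive_cst (c x : R) : is_derive (fun _ => c) x 0.
Proof. apply is_derive_Reals; apply derivable_pt_lim_const. Qed.
Lemma is_derive_idR (x : R) : is_derive (fun t => t) x 1.
Proof. apply is_derive_Reals; apply derivable_pt_lim_id. Qed.
Lemma is_derive_cos' x : is_derive cos x (- sin x).
Proof. apply is_derive_Reals. apply derivable_pt_lim_cos. Qed.
Lemma is_derive_sin' x : is_derive sin x (cos x).
Proof. apply is_derive_Reals. apply derivable_pt_lim_sin. Qed.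

Lemma locally_interval r : -1 < r < 1 -> locally r (fun x => -1 < x < 1).
Proof.
  intros H. assert (Hd : 0 < Rmin (1 - r) (r + 1)) by (apply Rmin_pos; lra).
  exists (mkposreal _ Hd). intros y Hy. simpl in Hy.
  unfold ball in Hy; simpl in Hy; unfold AbsRing_ball, abs, minus, plus, opp in Hy; simpl in Hy.
  assert (H1 := Rmin_l (1 - r) (r + 1)). assert (H2 := Rmin_r (1 - r) (r + 1)).
  apply Rabs_lt_between in Hy. lra.
Qed.

Lemma param_deriv (f df : R -> R -> R) r0 a b : a <= b ->
  (forall r t, -1 < r < 1 -> is_derive (fun r => f r t) r (df r t)) ->
  (forall r t, -1 < r < 1 -> cont2 df r t) -> (forall r t, -1 < r < 1 -> cont2 f r t) -> -1 < r0 < 1 ->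
  is_derive (fun r => RInt (fun t => f r t) a b) r0 (RInt (fun t => df r0 t) a b).
Proof.
  intros Hab Hd Hcd Hc Hr0.
  assert (E : RInt (fun t => df r0 t) a b = RInt (fun t => Derive (fun u => f u t) r0) a b).
  { apply RInt_ext. intros t _. symmetry. apply is_derive_unique. apply Hd; auto. }
  rewrite E.
  apply is_derive_RInt_param.
  - eapply filter_imp; [|apply locally_interval; exact Hr0]. intros x Hx t _.
    eexists; apply Hd; auto.
  - intros t _. apply continuity_2d_pt_ext_loc with (f := fun u v => df u v).
    + assert (L := locally_interval r0 Hr0). destruct L as [e He].
      exists e. intros u v Hu _. symmetry. apply is_derive_unique. apply Hd. apply He. exact Hu.
    + apply continuity_2d_pt_filterlim. apply Hcd; auto.
  - eapply filter_imp; [|apply locally_interval; exact Hr0]. intros x Hx.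
    apply (ex_RInt_continuous (V := R_CompleteNormedModule)). intros z _. apply cont2_1d. apply Hc; auto.
Qed.

Lemma zero_deriv_const (g : R -> R) a b : a < b ->
  (forall x, a < x < b -> is_derive g x 0) -> forall x y, a < x < b -> a < y < b -> g x = g y.
Proof.
  intros Hab Hd x y Hx Hy.
  destruct (MVT_gen g x y (fun _ => 0)) as [c [Hc Hc2]].
  - intros z Hz. apply Hd. split.
    + apply Rlt_le_trans with (Rmin x y). unfold Rmin; destruct (Rle_dec x y); lra. lra.
    + apply Rle_lt_trans with (Rmax x y). lra. unfold Rmax; destruct (Rle_dec x y); lra.
  - intros z Hz. apply continuity_pt_filterlim. apply (ex_derive_continuous (V := R_NormedModule)).
    eexists. apply Hd. split.
    + apply Rlt_le_trans with (Rmin x y). unfold Rmin; destruct (Rle_dec x y); lra. lra.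
    + apply Rle_lt_trans with (Rmax x y). lra. unfold Rmax; destruct (Rle_dec x y); lra.
  - lra.
Qed.

Lemma cont_R_cos : forall x, continuous cos x.
Proof. intros. apply (ex_derive_continuous (V := R_NormedModule)). auto_derive; auto. Qed.
Lemma cont_R_sin : forall x, continuous sin x.
Proof. intros. apply (ex_derive_continuous (V := R_NormedModule)). auto_derive; auto. Qed.

Lemma RInt_by_deriv (F f : R -> R) a b : a <= b ->
  (forall x, a <= x <= b -> is_derive F x (f x)) -> (forall x, a <= x <= b -> continuous f x) ->
  RInt f a b = F b - F a :> R.
Proof.
  intros Hab Hd Hc. apply is_RInt_unique.
  apply (is_RInt_derive F f).
  - intros x Hx. rewrite Rmin_left, Rmax_right in Hx by lra. auto.
  - intros x Hx. rewrite Rmin_left, Rmax_right in Hx by lra. auto.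
Qed.

Lemma I_cos : RInt cos 0 (2 * PI) = 0 :> R.
Proof.
  rewrite (RInt_by_deriv sin).
  - rewrite sin_2PI, sin_0. ring.
  - generalize PI_RGT_0; lra.
  - intros; apply is_derive_sin'.
  - intros; apply cont_R_cos.
Qed.

Lemma sin_4PI : sin (2 * (2 * PI)) = 0.
Proof. rewrite sin_2a, sin_2PI. ring. Qed.

Lemma I_cos2 : RInt (fun t => cos t * cos t) 0 (2 * PI) = PI :> R.
Proof.
  rewrite (RInt_by_deriv (fun t => t / 2 + sin (2 * t) / 4)).
  - rewrite sin_4PI. replace (2 * 0) with 0 by ring. rewrite sin_0. field.
  - generalize PI_RGT_0; lra.
  - intros x _. eapply is_derive_eq. auto_derive. auto.
    reflexivity. req. rewrite cos_2a_cos. field.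
  - intros x _. apply (continuous_mult cos cos); apply cont_R_cos.
Qed.

Lemma I_sincos : RInt (fun t => sin t * cos t) 0 (2 * PI) = 0 :> R.
Proof.
  rewrite (RInt_by_deriv (fun t => sin t * sin t / 2)).
  - rewrite sin_2PI, sin_0. field.
  - generalize PI_RGT_0; lra.
  - intros x _. eapply is_derive_eq. auto_derive. auto. reflexivity. req. field.
  - intros x _. apply (continuous_mult sin cos). apply cont_R_sin. apply cont_R_cos.
Qed.

Lemma cont_abscos x : continuous (fun t => Rabs (cos t)) x.
Proof. apply (continuous_comp cos Rabs). apply cont_R_cos. apply continuous_Rabs. Qed.

Lemma ex_RInt_abscos a b : ex_RInt (fun t => Rabs (cos t)) a b.
Proof. apply (ex_RInt_continuous (V := R_CompleteNormedModule)). intros; apply cont_abscos. Qed.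

Lemma I_abscos : RInt (fun t => Rabs (cos t)) 0 (2 * PI) = 4 :> R.
Proof.
  assert (HP := PI_RGT_0).
  rewrite <- (RInt_Chasles _ 0 (PI/2) (2*PI)) by apply ex_RInt_abscos.
  rewrite <- (RInt_Chasles _ (PI/2) (3*(PI/2)) (2*PI)) by apply ex_RInt_abscos.
  rewrite (RInt_ext _ cos 0 (PI/2)).
  2:{ intros x Hx. rewrite Rmin_left, Rmax_right in Hx by lra. apply Rabs_pos_eq. apply cos_ge_0; lra. }
  rewrite (RInt_ext _ (fun t => - cos t) (PI/2) (3*(PI/2))).
  2:{ intros x Hx. rewrite Rmin_left, Rmax_right in Hx by lra. apply Rabs_left1. apply cos_le_0; lra. }
  rewrite (RInt_ext _ cos (3*(PI/2)) (2*PI)).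
  2:{ intros x Hx. rewrite Rmin_left, Rmax_right in Hx by lra. apply Rabs_pos_eq.
      replace x with ((x - 2 * PI) + 2 * INR 1 * PI) by (simpl; ring). rewrite cos_period.
      apply cos_ge_0; lra. }
  rewrite (RInt_by_deriv sin cos 0 (PI/2)); [| lra | intros; apply is_derive_sin' | intros; apply cont_R_cos].
  rewrite (RInt_by_deriv (fun t => - sin t) (fun t => - cos t) (PI/2) (3*(PI/2)));
    [| lra | intros; apply (is_derive_opp sin); apply is_derive_sin' | intros; apply (continuous_opp cos); apply cont_R_cos].
  rewrite (RInt_by_deriv sin cos (3*(PI/2)) (2*PI)); [| lra | intros; apply is_derive_sin' | intros; apply cont_R_cos].
  rewrite sin_PI2, sin_0, sin_2PI, sin_3PI2. unfold plus; simpl. ring.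
Qed.

Lemma RInt_lin2 (f g : R -> R) a b x y : ex_RInt f a b -> ex_RInt g a b ->
  RInt (fun t => x * f t - y * g t) a b = x * RInt f a b - y * RInt g a b :> R.
Proof.
  intros Hf Hg. apply is_RInt_unique.
  apply (is_RInt_minus (V := R_NormedModule) (fun t => x * f t) (fun t => y * g t)).
  - apply (is_RInt_scal (V := R_NormedModule) f). apply (RInt_correct (V := R_CompleteNormedModule)); auto.
  - apply (is_RInt_scal (V := R_NormedModule) g). apply (RInt_correct (V := R_CompleteNormedModule)); auto.
Qed.

Lemma RInt_zero a b : RInt (fun _ => 0) a b = 0 :> R.
Proof.
  rewrite (RInt_const (V := R_CompleteNormedModule)). unfold scal; simpl; unfold mult; simpl. ring.
Qed.

Lemma RInt_neg (f : R -> R) a b : ex_RInt f a b -> RInt (fun t => - f t) a b = - RInt f a b :> R.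
Proof.
  intros H. apply is_RInt_unique.
  apply (is_RInt_opp (V := R_NormedModule) f). apply (RInt_correct (V := R_CompleteNormedModule)); auto.
Qed.


Definition UU (u : C -> R) (P1 P2 : R -> R -> R) r t := u (P1 r t, P2 r t).
Definition Ur (u : C -> R) (P1 P2 A1 A2 : R -> R -> R) r t :=
  dx u (P1 r t, P2 r t) * A1 r t + dy u (P1 r t, P2 r t) * A2 r t.
Definition Ut (u : C -> R) (P1 P2 A1 A2 : R -> R -> R) r t :=
  dx u (P1 r t, P2 r t) * (- r * A2 r t) + dy u (P1 r t, P2 r t) * (r * A1 r t).
Definition Urr (u : C -> R) (P1 P2 A1 A2 B1 B2 : R -> R -> R) r t :=
  (dx (dx u) (P1 r t, P2 r t) * A1 r t + dy (dx u) (P1 r t, P2 r t) * A2 r t) * A1 r t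
  + dx u (P1 r t, P2 r t) * B1 r t
  + (dx (dy u) (P1 r t, P2 r t) * A1 r t + dy (dy u) (P1 r t, P2 r t) * A2 r t) * A2 r t
  + dy u (P1 r t, P2 r t) * B2 r t.
Definition Utt (u : C -> R) (P1 P2 A1 A2 B1 B2 : R -> R -> R) r t :=
  (dx (dx u) (P1 r t, P2 r t) * (- r * A2 r t) + dy (dx u) (P1 r t, P2 r t) * (r * A1 r t)) * (- r * A2 r t)
  + dx u (P1 r t, P2 r t) * (-(r * r * B1 r t + r * A1 r t))
  + (dx (dy u) (P1 r t, P2 r t) * (- r * A2 r t) + dy (dy u) (P1 r t, P2 r t) * (r * A1 r t)) * (r * A1 r t)
  + dy u (P1 r t, P2 r t) * (-(r * r * B2 r t + r * A2 r t)).

Strategy expand [UU Ur Ut Urr Utt].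

Definition polar_ok (P1 P2 A1 A2 B1 B2 : R -> R -> R) := forall r t, -1 < r < 1 ->
  unit_disk (P1 r t, P2 r t) /\
  is_derive (fun r => P1 r t) r (A1 r t) /\ is_derive (fun r => P2 r t) r (A2 r t) /\
  is_derive (fun r => A1 r t) r (B1 r t) /\ is_derive (fun r => A2 r t) r (B2 r t) /\
  is_derive (fun t => P1 r t) t (- r * A2 r t) /\ is_derive (fun t => P2 r t) t (r * A1 r t) /\
  is_derive (fun t => - r * A2 r t) t (-(r * r * B1 r t + r * A1 r t)) /\
  is_derive (fun t => r * A1 r t) t (-(r * r * B2 r t + r * A2 r t)) /\
  cont2 P1 r t /\ cont2 P2 r t /\ cont2 A1 r t /\ cont2 A2 r t /\ cont2 B1 r t /\ cont2 B2 r t /\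
  P1 r (2 * PI) = P1 r 0 /\ P2 r (2 * PI) = P2 r 0 /\ A1 r (2 * PI) = A1 r 0 /\ A2 r (2 * PI) = A2 r 0.

Lemma harm_parts u : harmonic_on unit_disk u ->
  C1_on unit_disk u /\ C1_on unit_disk (dx u) /\ C1_on unit_disk (dy u) /\
  (forall p, unit_disk p -> dx (dx u) p + dy (dy u) p = 0).
Proof. intros [[H1 [H2 H3]] H4]. auto. Qed.

Ltac getP H r t Hr :=
  destruct (H r t Hr) as [Hin [HdP1 [HdP2 [HdA1 [HdA2 [HtP1 [HtP2 [HtA1 [HtA2
     [Hc1 [Hc2 [Hc3 [Hc4 [Hc5 [Hc6 [Hp1 [Hp2 [Hp3 Hp4]]]]]]]]]]]]]]]]]].

Lemma L_dUr u P1 P2 A1 A2 B1 B2 r t : harmonic_on unit_disk u -> polar_ok P1 P2 A1 A2 B1 B2 -> -1 < r < 1 ->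
  is_derive (fun r => UU u P1 P2 r t) r (Ur u P1 P2 A1 A2 r t).
Proof.
  intros Hu HP Hr. destruct (harm_parts u Hu) as [C0 [Cx [Cy Hl]]]. getP HP r t Hr.
  unfold UU, Ur. apply (chain_curve u (fun r => P1 r t) (fun r => P2 r t) r (A1 r t) (A2 r t)); auto.
Qed.

Lemma L_dUt u P1 P2 A1 A2 B1 B2 r t : harmonic_on unit_disk u -> polar_ok P1 P2 A1 A2 B1 B2 -> -1 < r < 1 ->
  is_derive (fun t => UU u P1 P2 r t) t (Ut u P1 P2 A1 A2 r t).
Proof.
  intros Hu HP Hr. destruct (harm_parts u Hu) as [C0 [Cx [Cy Hl]]]. getP HP r t Hr.
  unfold UU, Ut. apply (chain_curve u (fun t => P1 r t) (fun t => P2 r t) t (- r * A2 r t) (r * A1 r t)); auto.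
Qed.

Lemma L_dUrr u P1 P2 A1 A2 B1 B2 r t : harmonic_on unit_disk u -> polar_ok P1 P2 A1 A2 B1 B2 -> -1 < r < 1 ->
  is_derive (fun r => Ur u P1 P2 A1 A2 r t) r (Urr u P1 P2 A1 A2 B1 B2 r t).
Proof.
  intros Hu HP Hr. destruct (harm_parts u Hu) as [C0 [Cx [Cy Hl]]]. getP HP r t Hr.
  unfold Ur. eapply is_derive_eq.
  - apply is_derive_Rplus.
    + apply is_derive_Rmult. apply (chain_curve (dx u) (fun r => P1 r t) (fun r => P2 r t) r (A1 r t) (A2 r t)); auto. exact HdA1.
    + apply is_derive_Rmult. apply (chain_curve (dy u) (fun r => P1 r t) (fun r => P2 r t) r (A1 r t) (A2 r t)); auto. exact HdA2.
  - unfold Urr. req. ring.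
Qed.

Lemma L_dUtt u P1 P2 A1 A2 B1 B2 r t : harmonic_on unit_disk u -> polar_ok P1 P2 A1 A2 B1 B2 -> -1 < r < 1 ->
  is_derive (fun t => Ut u P1 P2 A1 A2 r t) t (Utt u P1 P2 A1 A2 B1 B2 r t).
Proof.
  intros Hu HP Hr. destruct (harm_parts u Hu) as [C0 [Cx [Cy Hl]]]. getP HP r t Hr.
  unfold Ut. eapply is_derive_eq.
  - apply is_derive_Rplus.
    + apply is_derive_Rmult. apply (chain_curve (dx u) (fun t => P1 r t) (fun t => P2 r t) t (- r * A2 r t) (r * A1 r t)); auto. exact HtA1.
    + apply is_derive_Rmult. apply (chain_curve (dy u) (fun t => P1 r t) (fun t => P2 r t) t (- r * A2 r t) (r * A1 r t)); auto. exact HtA2.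
  - unfold Utt. req. ring.
Qed.

Lemma lap_alg (r a b c d e f A1 A2 B1 B2 : R) : a + b = 0 ->
  r * r * ((a * A1 + c * A2) * A1 + e * B1 + (d * A1 + b * A2) * A2 + f * B2)
  + r * (e * A1 + f * A2)
  + ((a * (- r * A2) + c * (r * A1)) * (- r * A2) + e * (-(r * r * B1 + r * A1))
     + (d * (- r * A2) + b * (r * A1)) * (r * A1) + f * (-(r * r * B2 + r * A2))) = 0.
Proof. intros H. replace b with (- a) by lra. ring. Qed.

Lemma L_lap0 u P1 P2 A1 A2 B1 B2 r t : dx (dx u) (P1 r t, P2 r t) + dy (dy u) (P1 r t, P2 r t) = 0 ->
  r * r * Urr u P1 P2 A1 A2 B1 B2 r t + r * Ur u P1 P2 A1 A2 r t + Utt u P1 P2 A1 A2 B1 B2 r t = 0.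
Proof.
  intros H.
  exact (lap_alg r _ _ (dy (dx u) (P1 r t, P2 r t)) (dx (dy u) (P1 r t, P2 r t)) (dx u (P1 r t, P2 r t)) (dy u (P1 r t, P2 r t)) (A1 r t) (A2 r t) (B1 r t) (B2 r t) H).
Qed.
Lemma L_lap u P1 P2 A1 A2 B1 B2 r t : harmonic_on unit_disk u -> polar_ok P1 P2 A1 A2 B1 B2 -> -1 < r < 1 ->
  r * r * Urr u P1 P2 A1 A2 B1 B2 r t + r * Ur u P1 P2 A1 A2 r t + Utt u P1 P2 A1 A2 B1 B2 r t = 0.
Proof.
  intros Hu HP Hr. apply L_lap0. apply (proj2 Hu). apply (proj1 (HP r t Hr)).
Qed.


Lemma cont_of_C1 (h : C -> R) p : C1_on unit_disk h -> unit_disk p -> continuous h p.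
Proof. intros H Hp. destruct (H p Hp) as [_ [_ [K _]]]. exact K. Qed.
Lemma contx_of_C1 (h : C -> R) p : C1_on unit_disk h -> unit_disk p -> continuous (dx h) p.
Proof. intros H Hp. destruct (H p Hp) as [_ [_ [_ [K _]]]]. exact K. Qed.
Lemma conty_of_C1 (h : C -> R) p : C1_on unit_disk h -> unit_disk p -> continuous (dy h) p.
Proof. intros H Hp. destruct (H p Hp) as [_ [_ [_ [_ K]]]]. exact K. Qed.

Ltac hyp_exact :=
  match goal with
  | |- cont2 ?F ?r ?t => match goal with K : cont2 F r t |- _ => exact K end
  | |- continuous ?h ?p => match goal with K : continuous h p |- _ => exact K end
  end.

Ltac cont_tac :=
  repeat match goal with
  | |- cont2 (fun a b => _ + _) _ _ => apply cont2_plus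
  | |- cont2 (fun a b => _ * _) _ _ => apply cont2_mult
  | |- cont2 (fun a b => - _) _ _ => apply cont2_opp
  | |- cont2 (fun a b => a) _ _ => apply cont2_fst
  | |- cont2 (fun a b => ?h (?F a b, ?G a b)) _ _ =>
      apply (cont2_comp h F G); [hyp_exact|hyp_exact|hyp_exact]
  | |- cont2 _ _ _ => hyp_exact
  end.

Lemma L_cont u P1 P2 A1 A2 B1 B2 r t : harmonic_on unit_disk u -> polar_ok P1 P2 A1 A2 B1 B2 -> -1 < r < 1 ->
  cont2 (UU u P1 P2) r t /\ cont2 (Ur u P1 P2 A1 A2) r t /\ cont2 (Urr u P1 P2 A1 A2 B1 B2) r t
  /\ cont2 (Utt u P1 P2 A1 A2 B1 B2) r t.
Proof.
  intros Hu HP Hr. destruct (harm_parts u Hu) as [C0 [Cx [Cy Hl]]]. getP HP r t Hr.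
  assert (K1 := cont_of_C1 u _ C0 Hin). assert (K2 := contx_of_C1 u _ C0 Hin).
  assert (K3 := conty_of_C1 u _ C0 Hin). assert (K4 := contx_of_C1 (dx u) _ Cx Hin).
  assert (K5 := conty_of_C1 (dx u) _ Cx Hin). assert (K6 := contx_of_C1 (dy u) _ Cy Hin).
  assert (K7 := conty_of_C1 (dy u) _ Cy Hin).
  unfold UU, Ur, Urr, Utt. split; [cont_tac|split; [cont_tac|split; cont_tac]].
Qed.

Lemma cont2_cos_snd r t : cont2 (fun _ b => cos b) r t.
Proof. apply (cont2_cos (fun _ b => b)). apply cont2_snd. Qed.

Lemma grad_core u P1 P2 A1 A2 B1 B2 w1 w2 m c s :
  harmonic_on unit_disk u -> (forall z, unit_disk z -> Rabs (u z) <= 1) ->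
  polar_ok P1 P2 A1 A2 B1 B2 ->
  (forall t, P1 0 t = w1 /\ P2 0 t = w2 /\ A1 0 t = m * (c * cos t - s * sin t) /\ A2 0 t = m * (s * cos t + c * sin t)) ->
  PI * m * (dx u (w1, w2) * c + dy u (w1, w2) * s) <= 4.
Proof.
  intros Hu Hb HP H0.
  assert (HPI := PI_RGT_0).
  set (F := fun r t => UU u P1 P2 r t * cos t).
  set (dF := fun r t => Ur u P1 P2 A1 A2 r t * cos t).
  set (n := fun r => RInt (fun t => F r t) 0 (2 * PI)).
  set (n' := fun r => RInt (fun t => dF r t) 0 (2 * PI)).
  assert (HcF : forall r t, -1 < r < 1 -> cont2 F r t).
  { intros r t Hr. destruct (L_cont u P1 P2 A1 A2 B1 B2 r t Hu HP Hr) as [K1 [K2 [K3 K4]]].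
    apply cont2_mult; auto. apply cont2_cos_snd. }
  assert (HcdF : forall r t, -1 < r < 1 -> cont2 dF r t).
  { intros r t Hr. destruct (L_cont u P1 P2 A1 A2 B1 B2 r t Hu HP Hr) as [K1 [K2 [K3 K4]]].
    apply cont2_mult; auto. apply cont2_cos_snd. }
  assert (Hn : forall r, -1 < r < 1 -> is_derive n r (n' r)).
  { intros r Hr. unfold n, n'. apply param_deriv; auto. lra.
    intros r0 t Hr0. unfold F, dF. eapply is_derive_eq.
    apply is_derive_Rmult. apply (L_dUr u P1 P2 A1 A2 B1 B2); auto. apply is_derive_cst. cbv beta; req; ring. }
  set (G := fun r t => (r * r * Ur u P1 P2 A1 A2 r t - r * UU u P1 P2 r t) * cos t).
  set (dG := fun r t => (r * r * Urr u P1 P2 A1 A2 B1 B2 r t + r * Ur u P1 P2 A1 A2 r t - UU u P1 P2 r t) * cos t).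
  set (Q := fun r => RInt (fun t => G r t) 0 (2 * PI)).
  assert (HQ : forall r, -1 < r < 1 -> is_derive Q r (RInt (fun t => dG r t) 0 (2 * PI))).
  { intros r Hr. unfold Q. apply param_deriv; auto. lra.
    - intros r0 t Hr0. unfold G, dG. eapply is_derive_eq.
      apply is_derive_Rmult. apply is_derive_Rminus.
      apply is_derive_Rmult. apply is_derive_Rmult. apply is_derive_idR. apply is_derive_idR.
      apply (L_dUrr u P1 P2 A1 A2 B1 B2); auto.
      apply is_derive_Rmult. apply is_derive_idR. apply (L_dUr u P1 P2 A1 A2 B1 B2); auto.
      apply is_derive_cst. cbv beta; req; ring.
    - intros r0 t Hr0. destruct (L_cont u P1 P2 A1 A2 B1 B2 r0 t Hu HP Hr0) as [K1 [K2 [K3 K4]]].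
      unfold dG. apply cont2_mult. 2: apply cont2_cos_snd.
      apply cont2_minus. apply cont2_plus. apply cont2_mult. apply cont2_mult; apply cont2_fst. exact K3.
      apply cont2_mult. apply cont2_fst. exact K2. exact K1.
    - intros r0 t Hr0. destruct (L_cont u P1 P2 A1 A2 B1 B2 r0 t Hu HP Hr0) as [K1 [K2 [K3 K4]]].
      unfold G. apply cont2_mult. 2: apply cont2_cos_snd.
      apply cont2_minus. apply cont2_mult. apply cont2_mult; apply cont2_fst. exact K2.
      apply cont2_mult. apply cont2_fst. exact K1. }
  assert (HG0 : forall r, -1 < r < 1 -> RInt (fun t => dG r t) 0 (2 * PI) = 0 :> R).
  { intros r Hr.
    rewrite (RInt_ext _ (fun t => - ((Utt u P1 P2 A1 A2 B1 B2 r t + UU u P1 P2 r t) * cos t))).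
    2:{ intros t _. unfold dG. generalize (L_lap u P1 P2 A1 A2 B1 B2 r t Hu HP Hr). intros HL.
        replace (r * r * Urr u P1 P2 A1 A2 B1 B2 r t + r * Ur u P1 P2 A1 A2 r t - UU u P1 P2 r t)
          with (- (Utt u P1 P2 A1 A2 B1 B2 r t + UU u P1 P2 r t)) by lra. req; ring. }
    assert (Hct : forall x, continuous (fun t => (Utt u P1 P2 A1 A2 B1 B2 r t + UU u P1 P2 r t) * cos t) x).
    { intros x. destruct (L_cont u P1 P2 A1 A2 B1 B2 r x Hu HP Hr) as [K1 [K2 [K3 K4]]].
      apply (cont2_1d (fun r t => (Utt u P1 P2 A1 A2 B1 B2 r t + UU u P1 P2 r t) * cos t)).
      apply cont2_mult. apply cont2_plus; auto. apply cont2_cos_snd. }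
    rewrite RInt_neg. 2:{ apply (ex_RInt_continuous (V := R_CompleteNormedModule)). intros; apply Hct. }
    rewrite (RInt_by_deriv (fun t => Ut u P1 P2 A1 A2 r t * cos t + UU u P1 P2 r t * sin t)).
    - destruct (HP r 0 Hr) as [_ [_ [_ [_ [_ [_ [_ [_ [_ [_ [_ [_ [_ [_ [_ [Hp1 [Hp2 [Hp3 Hp4]]]]]]]]]]]]]]]]]].
      unfold Ut, UU. rewrite Hp1, Hp2, Hp3, Hp4, cos_2PI, sin_2PI, cos_0, sin_0. ring.
    - lra.
    - intros x _. eapply is_derive_eq.
      apply is_derive_Rplus; apply is_derive_Rmult.
      apply (L_dUtt u P1 P2 A1 A2 B1 B2); auto. apply is_derive_cos'.
      apply (L_dUt u P1 P2 A1 A2 B1 B2); auto. apply is_derive_sin'.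
      cbv beta; req; ring.
    - intros x _. apply Hct. }
  assert (HQc : forall r, -1 < r < 1 -> Q r = 0).
  { intros r Hr.
    rewrite (zero_deriv_const Q (-1) 1) with (y := 0); try lra.
    - unfold Q. rewrite (RInt_ext _ (fun _ => 0)). apply RInt_zero.
      intros t _. unfold G. req; ring.
    - intros x Hx. eapply is_derive_eq. apply HQ; auto. apply HG0; auto. }
  assert (HQn : forall r, -1 < r < 1 -> Q r = r * r * n' r - r * n r).
  { intros r Hr. unfold Q, n, n'.
    rewrite (RInt_ext _ (fun t => r * r * dF r t - r * F r t)).
    2:{ intros t _. unfold G, dF, F. req; ring. }
    apply RInt_lin2.
    - apply (ex_RInt_continuous (V := R_CompleteNormedModule)). intros z _. apply cont2_1d. apply HcdF; auto.
    - apply (ex_RInt_continuous (V := R_CompleteNormedModule)). intros z _. apply cont2_1d. apply HcF; auto. }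
  set (ux := dx u (w1, w2)). set (uy := dy u (w1, w2)).
  assert (Hn0 : n 0 = 0).
  { unfold n, F. rewrite (RInt_ext _ (fun t => u (w1, w2) * cos t)).
    2:{ intros t _. unfold UU. destruct (H0 t) as [E1 [E2 _]]. rewrite E1, E2. reflexivity. }
    rewrite (RInt_by_deriv (fun t => u (w1, w2) * sin t)).
    - rewrite sin_2PI, sin_0. req; ring.
    - lra.
    - intros x _. eapply is_derive_eq. apply is_derive_Rmult. apply is_derive_cst. apply is_derive_sin'.
      cbv beta; req; ring.
    - intros x _. apply (continuous_mult (fun _ => u (w1, w2)) cos). apply continuous_const. apply cont_R_cos. }
  assert (Hn'0 : n' 0 = PI * m * (ux * c + uy * s)).
  { unfold n', dF. rewrite (RInt_ext _ (fun t => (ux * (m * (c * cos t - s * sin t)) + uy * (m * (s * cos t + c * sin t))) * cos t)).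
    2:{ intros t _. unfold Ur. destruct (H0 t) as [E1 [E2 [E3 E4]]]. rewrite E1, E2, E3, E4. reflexivity. }
    rewrite (RInt_by_deriv (fun t => m * (ux * c + uy * s) * (t / 2 + sin (2 * t) / 4) + m * (uy * c - ux * s) * (sin t * sin t / 2))).
    - rewrite sin_4PI, sin_2PI. replace (2 * 0) with 0 by ring. rewrite sin_0. req; field.
    - lra.
    - intros x _. eapply is_derive_eq. auto_derive. auto. reflexivity. req. rewrite cos_2a_cos. field.
    - intros x _. apply (ex_derive_continuous (V := R_NormedModule)). auto_derive. auto. }
  assert (Hbd : forall r, -1 < r < 1 -> Rabs (n r) <= 4).
  { intros r Hr. unfold n, F. rewrite <- I_abscos.
    assert (Hex : ex_RInt (fun t => UU u P1 P2 r t * cos t) 0 (2 * PI)).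
    { apply (ex_RInt_continuous (V := R_CompleteNormedModule)). intros z _. exact (cont2_1d F r z (HcF r z Hr)). }
    eapply Rle_trans. apply abs_RInt_le. lra. exact Hex.
    apply RInt_le. lra.
    - apply (ex_RInt_continuous (V := R_CompleteNormedModule)). intros z _.
      apply (continuous_comp (fun t => UU u P1 P2 r t * cos t) Rabs). exact (cont2_1d F r z (HcF r z Hr)).
      apply continuous_Rabs.
    - apply ex_RInt_abscos.
    - intros t _. rewrite Rabs_mult. destruct (HP r t Hr) as [Hin _].
      assert (Hu1 := Hb _ Hin). unfold UU. assert (0 <= Rabs (cos t)) by apply Rabs_pos. nra. }
  assert (Hrel : forall r, 0 < r < 1 -> n' r * r = n r).
  { intros r Hr. assert (Hr' : -1 < r < 1) by lra. generalize (HQc r Hr') (HQn r Hr'). intros E1 E2.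
    rewrite E1 in E2. apply Rmult_eq_reg_l with r; [|lra]. nra. }
  set (C0 := n' 0).
  assert (Hk : forall r, 0 < r < 1 -> n r / r = C0).
  { intros r Hr.
    assert (Hkc : forall x y, 0 < x < 1 -> 0 < y < 1 -> n x / x = n y / y).
    { apply (zero_deriv_const (fun x => n x / x) 0 1). lra.
      intros x Hx.
      assert (Hinv : is_derive (fun y : R => / y) x (- / (x * x))).
      { eapply is_derive_eq. auto_derive. lra. reflexivity. req. field. lra. }
      eapply is_derive_eq.
      apply is_derive_Rmult. apply Hn; lra. exact Hinv. cbv beta. req.
      rewrite <- (Hrel x Hx). field. lra. }
    destruct (Req_dec (n r / r) C0) as [E|NE]; auto. exfalso.
    assert (He : 0 < Rabs (n r / r - C0)) by (apply Rabs_pos_lt; lra).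
    assert (Hd := Hn 0 ltac:(lra)). apply is_derive_Reals in Hd.
    destruct (Hd _ He) as [d Hdd].
    set (h := Rmin (d / 2) (1 / 2)).
    assert (Hh : 0 < h <= 1/2) by (unfold h; split; [apply Rmin_pos; destruct d; simpl; lra | apply Rmin_r]).
    assert (Hh2 : h < d) by (unfold h; apply Rle_lt_trans with (d/2); [apply Rmin_l | destruct d; simpl; lra]).
    specialize (Hdd h ltac:(lra) ltac:(rewrite Rabs_pos_eq; lra)).
    replace (0 + h) with h in Hdd by ring. rewrite Hn0 in Hdd.
    replace ((n h - 0) / h) with (n h / h) in Hdd by (field; lra).
    rewrite (Hkc h r) in Hdd by lra. fold C0 in Hdd. lra. }
  assert (HC : C0 <= 4).
  { destruct (Rle_dec C0 4) as [L|L]; auto. exfalso.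
    set (r := (1 + 4 / C0) / 2).
    assert (Hr : 0 < r < 1).
    { unfold r. assert (0 < 4 / C0 < 1). split. apply Rdiv_lt_0_compat; lra.
      apply Rmult_lt_reg_r with C0. lra. unfold Rdiv. rewrite Rmult_assoc, Rinv_l by lra. lra. lra. }
    assert (E := Hk r Hr). assert (B := Hbd r ltac:(lra)).
    assert (En : n r = C0 * r :> R).
    { assert (Hg : forall a b : R, a / r = b -> a = b * r) by (intros a b Hab; subst b; field; lra).
      apply Hg; exact E. }
    rewrite En in B. unfold r in B. rewrite Rabs_pos_eq in B.
    2:{ assert (0 < 4 / C0) by (apply Rdiv_lt_0_compat; lra). apply Rmult_le_pos; lra. }
    assert (C0 * ((1 + 4 / C0) / 2) = (C0 + 4) / 2) by (req; field; lra). lra. }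
  unfold C0 in HC. rewrite Hn'0 in HC. exact HC.
Qed.

Definition D1 w1 w2 X Y := 1 + w1 * X + w2 * Y.
Definition D2 w1 w2 X Y := w1 * Y - w2 * X.
Definition QQ w1 w2 X Y := D1 w1 w2 X Y * D1 w1 w2 X Y + D2 w1 w2 X Y * D2 w1 w2 X Y.
Definition kk w1 w2 := 1 - w1 * w1 - w2 * w2.
Definition M1f w1 w2 X Y := ((X + w1) * D1 w1 w2 X Y + (Y + w2) * D2 w1 w2 X Y) / QQ w1 w2 X Y.
Definition M2f w1 w2 X Y := ((Y + w2) * D1 w1 w2 X Y - (X + w1) * D2 w1 w2 X Y) / QQ w1 w2 X Y.
Definition Md1 w1 w2 X Y := kk w1 w2 * (D1 w1 w2 X Y * D1 w1 w2 X Y - D2 w1 w2 X Y * D2 w1 w2 X Y) / (QQ w1 w2 X Y * QQ w1 w2 X Y).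
Definition Md2 w1 w2 X Y := - (2 * kk w1 w2 * D1 w1 w2 X Y * D2 w1 w2 X Y) / (QQ w1 w2 X Y * QQ w1 w2 X Y).
Definition pp w1 w2 X Y := D1 w1 w2 X Y * D1 w1 w2 X Y * D1 w1 w2 X Y - 3 * D1 w1 w2 X Y * D2 w1 w2 X Y * D2 w1 w2 X Y.
Definition qq w1 w2 X Y := D2 w1 w2 X Y * D2 w1 w2 X Y * D2 w1 w2 X Y - 3 * D1 w1 w2 X Y * D1 w1 w2 X Y * D2 w1 w2 X Y.
Definition Mdd1 w1 w2 X Y := -2 * kk w1 w2 * (w1 * pp w1 w2 X Y + w2 * qq w1 w2 X Y) / (QQ w1 w2 X Y * QQ w1 w2 X Y * QQ w1 w2 X Y).
Definition Mdd2 w1 w2 X Y := -2 * kk w1 w2 * (w1 * qq w1 w2 X Y - w2 * pp w1 w2 X Y) / (QQ w1 w2 X Y * QQ w1 w2 X Y * QQ w1 w2 X Y).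



Lemma dX_M1 w1 w2 X Y : QQ w1 w2 X Y <> 0 -> is_derive (fun x => M1f w1 w2 x Y) X (Md1 w1 w2 X Y).
Proof.
  intros H. unfold M1f, Md1, QQ, kk, D1, D2 in *. eapply is_derive_ext. intros; reflexivity.
  (auto_derive; [exact H | req; field; exact H]).
Qed.

Ltac mob_tac H := unfold M1f, M2f, Md1, Md2, Mdd1, Mdd2, pp, qq, QQ, kk, D1, D2 in *;
  auto_derive; [ repeat split; repeat (apply Rmult_integral_contrapositive_currified; auto); auto
               | req; field; auto ].

Lemma dY_M1 w1 w2 X Y : QQ w1 w2 X Y <> 0 -> is_derive (fun y => M1f w1 w2 X y) Y (- Md2 w1 w2 X Y).
Proof. intros H. mob_tac H. Qed.
Lemma dX_M2 w1 w2 X Y : QQ w1 w2 X Y <> 0 -> is_derive (fun x => M2f w1 w2 x Y) X (Md2 w1 w2 X Y).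
Proof. intros H. mob_tac H. Qed.
Lemma dY_M2 w1 w2 X Y : QQ w1 w2 X Y <> 0 -> is_derive (fun y => M2f w1 w2 X y) Y (Md1 w1 w2 X Y).
Proof. intros H. mob_tac H. Qed.
Lemma dX_Md1 w1 w2 X Y : QQ w1 w2 X Y <> 0 -> is_derive (fun x => Md1 w1 w2 x Y) X (Mdd1 w1 w2 X Y).
Proof. intros H. mob_tac H. Qed.
Lemma dY_Md1 w1 w2 X Y : QQ w1 w2 X Y <> 0 -> is_derive (fun y => Md1 w1 w2 X y) Y (- Mdd2 w1 w2 X Y).
Proof. intros H. mob_tac H. Qed.
Lemma dX_Md2 w1 w2 X Y : QQ w1 w2 X Y <> 0 -> is_derive (fun x => Md2 w1 w2 x Y) X (Mdd2 w1 w2 X Y).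
Proof. intros H. mob_tac H. Qed.
Lemma dY_Md2 w1 w2 X Y : QQ w1 w2 X Y <> 0 -> is_derive (fun y => Md2 w1 w2 X y) Y (Mdd1 w1 w2 X Y).
Proof. intros H. mob_tac H. Qed.

Lemma diff_expl (F Fx Fy : R -> R -> R) X Y (Om : R -> R -> Prop) :
  locally_2d Om X Y ->
  (forall x y, Om x y -> is_derive (fun x => F x y) x (Fx x y)) ->
  (forall x y, Om x y -> is_derive (fun y => F x y) y (Fy x y)) ->
  cont2 Fx X Y -> differentiable_pt_lim F X Y (Fx X Y) (Fy X Y).
Proof.
  intros HO Hx Hy Hc.
  assert (HO0 : Om X Y) by (destruct HO as [d Hd]; apply Hd; rewrite Rminus_diag, Rabs_R0; apply cond_pos).
  assert (E1 : Derive (fun z => F z Y) X = Fx X Y) by (apply is_derive_unique; auto).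
  assert (E2 : Derive (fun z => F X z) Y = Fy X Y) by (apply is_derive_unique; auto).
  rewrite <- E1, <- E2. apply diff_of_partials.
  - destruct HO as [d Hd]. exists d. intros u v Hu Hv. eexists. apply Hx. apply Hd; auto.
  - apply continuity_2d_pt_ext_loc with (f := Fx).
    + destruct HO as [d Hd]. exists d. intros u v Hu Hv. symmetry. apply is_derive_unique. apply Hx. apply Hd; auto.
    + apply continuity_2d_pt_filterlim. exact Hc.
  - eexists; apply Hy; auto.
Qed.

Lemma chain_expl (F Fx Fy : R -> R -> R) (x y : R -> R) t x' y' :
  differentiable_pt_lim F (x t) (y t) (Fx (x t) (y t)) (Fy (x t) (y t)) ->
  is_derive x t x' -> is_derive y t y' ->
  is_derive (fun s => F (x s) (y s)) t (Fx (x t) (y t) * x' + Fy (x t) (y t) * y').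
Proof.
  intros HF Hx Hy. apply is_derive_Reals. apply derivable_pt_lim_comp_2d; auto; apply is_derive_Reals; auto.
Qed.

Ltac crat := unfold Rdiv; repeat match goal with
  | |- cont2 (fun a b => _ + _) _ _ => apply cont2_plus
  | |- cont2 (fun a b => _ - _) _ _ => apply cont2_minus
  | |- cont2 (fun a b => _ * _) _ _ => apply cont2_mult
  | |- cont2 (fun a b => - _) _ _ => apply cont2_opp
  | |- cont2 (fun a b => / _) _ _ => apply cont2_inv
  | |- cont2 (fun a b => a) _ _ => apply cont2_fst
  | |- cont2 (fun a b => b) _ _ => apply cont2_snd
  | |- cont2 (fun a b => cos _) _ _ => apply cont2_cos
  | |- cont2 (fun a b => sin _) _ _ => apply cont2_sin
  | |- cont2 (fun a b => _) _ _ => apply cont2_const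
  end.

Lemma QQ_id w1 w2 X Y : QQ w1 w2 X Y - ((X + w1) * (X + w1) + (Y + w2) * (Y + w2)) = kk w1 w2 * (1 - X * X - Y * Y).
Proof. unfold QQ, kk, D1, D2. ring. Qed.

Lemma cont_QQ w1 w2 X Y : cont2 (QQ w1 w2) X Y.
Proof. unfold QQ, D1, D2. crat. Qed.

Lemma locally_QQ w1 w2 X Y : QQ w1 w2 X Y <> 0 -> locally_2d (fun x y => QQ w1 w2 x y <> 0) X Y.
Proof.
  intros H. apply continuity_2d_pt_neq_0; auto. apply continuity_2d_pt_filterlim. apply cont_QQ.
Qed.

Lemma QQ2 w1 w2 X Y : QQ w1 w2 X Y <> 0 -> QQ w1 w2 X Y * QQ w1 w2 X Y <> 0.
Proof. intros H. apply Rmult_integral_contrapositive_currified; auto. Qed.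
Lemma QQ3 w1 w2 X Y : QQ w1 w2 X Y <> 0 -> QQ w1 w2 X Y * QQ w1 w2 X Y * QQ w1 w2 X Y <> 0.
Proof. intros H. repeat apply Rmult_integral_contrapositive_currified; auto. Qed.

Lemma cont_Md1 w1 w2 X Y : QQ w1 w2 X Y <> 0 -> cont2 (Md1 w1 w2) X Y.
Proof. intros H. generalize (QQ2 _ _ _ _ H). unfold Md1, QQ, kk, D1, D2 in *. intros H2. crat; auto. Qed.
Lemma cont_Md2 w1 w2 X Y : QQ w1 w2 X Y <> 0 -> cont2 (Md2 w1 w2) X Y.
Proof. intros H. generalize (QQ2 _ _ _ _ H). unfold Md2, QQ, kk, D1, D2 in *. intros H2. crat; auto. Qed.
Lemma cont_Mdd1 w1 w2 X Y : QQ w1 w2 X Y <> 0 -> cont2 (Mdd1 w1 w2) X Y.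
Proof. intros H. generalize (QQ3 _ _ _ _ H). unfold Mdd1, pp, qq, QQ, kk, D1, D2 in *. intros H2. crat; auto. Qed.
Lemma cont_Mdd2 w1 w2 X Y : QQ w1 w2 X Y <> 0 -> cont2 (Mdd2 w1 w2) X Y.
Proof. intros H. generalize (QQ3 _ _ _ _ H). unfold Mdd2, pp, qq, QQ, kk, D1, D2 in *. intros H2. crat; auto. Qed.
Lemma cont_M1 w1 w2 X Y : QQ w1 w2 X Y <> 0 -> cont2 (M1f w1 w2) X Y.
Proof. intros H. unfold M1f, QQ, kk, D1, D2 in *. crat; auto. Qed.
Lemma cont_M2 w1 w2 X Y : QQ w1 w2 X Y <> 0 -> cont2 (M2f w1 w2) X Y.
Proof. intros H. unfold M2f, QQ, kk, D1, D2 in *. crat; auto. Qed.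

Definition Omg w1 w2 := fun x y => QQ w1 w2 x y <> 0.

Lemma diff_M1 w1 w2 X Y : QQ w1 w2 X Y <> 0 -> differentiable_pt_lim (M1f w1 w2) X Y (Md1 w1 w2 X Y) (- Md2 w1 w2 X Y).
Proof.
  intros H. apply (diff_expl (M1f w1 w2) (Md1 w1 w2) (fun x y => - Md2 w1 w2 x y) X Y (Omg w1 w2)).
  apply locally_QQ; auto. intros; apply dX_M1; auto. intros; apply dY_M1; auto. apply cont_Md1; auto.
Qed.
Lemma diff_M2 w1 w2 X Y : QQ w1 w2 X Y <> 0 -> differentiable_pt_lim (M2f w1 w2) X Y (Md2 w1 w2 X Y) (Md1 w1 w2 X Y).
Proof.
  intros H. apply (diff_expl (M2f w1 w2) (Md2 w1 w2) (Md1 w1 w2) X Y (Omg w1 w2)).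
  apply locally_QQ; auto. intros; apply dX_M2; auto. intros; apply dY_M2; auto. apply cont_Md2; auto.
Qed.
Lemma diff_Md1 w1 w2 X Y : QQ w1 w2 X Y <> 0 -> differentiable_pt_lim (Md1 w1 w2) X Y (Mdd1 w1 w2 X Y) (- Mdd2 w1 w2 X Y).
Proof.
  intros H. apply (diff_expl (Md1 w1 w2) (Mdd1 w1 w2) (fun x y => - Mdd2 w1 w2 x y) X Y (Omg w1 w2)).
  apply locally_QQ; auto. intros; apply dX_Md1; auto. intros; apply dY_Md1; auto. apply cont_Mdd1; auto.
Qed.
Lemma diff_Md2 w1 w2 X Y : QQ w1 w2 X Y <> 0 -> differentiable_pt_lim (Md2 w1 w2) X Y (Mdd2 w1 w2 X Y) (Mdd1 w1 w2 X Y).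
Proof.
  intros H. apply (diff_expl (Md2 w1 w2) (Mdd2 w1 w2) (Mdd1 w1 w2) X Y (Omg w1 w2)).
  apply locally_QQ; auto. intros; apply dX_Md2; auto. intros; apply dY_Md2; auto. apply cont_Mdd2; auto.
Qed.

Definition ea c s t := c * cos t - s * sin t.
Definition eb c s t := s * cos t + c * sin t.
Definition PM1 w1 w2 c s r t := M1f w1 w2 (r * ea c s t) (r * eb c s t).
Definition PM2 w1 w2 c s r t := M2f w1 w2 (r * ea c s t) (r * eb c s t).
Definition PA1 w1 w2 c s r t := Md1 w1 w2 (r * ea c s t) (r * eb c s t) * ea c s t - Md2 w1 w2 (r * ea c s t) (r * eb c s t) * eb c s t.
Definition PA2 w1 w2 c s r t := Md1 w1 w2 (r * ea c s t) (r * eb c s t) * eb c s t + Md2 w1 w2 (r * ea c s t) (r * eb c s t) * ea c s t.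
Definition PB1 w1 w2 c s r t := Mdd1 w1 w2 (r * ea c s t) (r * eb c s t) * (ea c s t * ea c s t - eb c s t * eb c s t)
   - Mdd2 w1 w2 (r * ea c s t) (r * eb c s t) * (2 * ea c s t * eb c s t).
Definition PB2 w1 w2 c s r t := Mdd1 w1 w2 (r * ea c s t) (r * eb c s t) * (2 * ea c s t * eb c s t)
   + Mdd2 w1 w2 (r * ea c s t) (r * eb c s t) * (ea c s t * ea c s t - eb c s t * eb c s t).

Lemma ea_eb c s t : c * c + s * s = 1 -> ea c s t * ea c s t + eb c s t * eb c s t = 1.
Proof.
  intros H. unfold ea, eb. assert (E := sin2_cos2 t). unfold Rsqr in E.
  transitivity ((c * c + s * s) * (sin t * sin t + cos t * cos t)). ring. rewrite H, E. ring.
Qed.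

Lemma d_ea c s t : is_derive (ea c s) t (- eb c s t).
Proof. unfold ea, eb. auto_derive. auto. req. ring. Qed.
Lemma d_eb c s t : is_derive (eb c s) t (ea c s t).
Proof. unfold ea, eb. auto_derive. auto. req. ring. Qed.

Lemma mob_QQ w1 w2 X Y : w1 * w1 + w2 * w2 < 1 -> X * X + Y * Y < 1 -> 0 < QQ w1 w2 X Y.
Proof.
  intros Hw HX. assert (E := QQ_id w1 w2 X Y). unfold kk in E.
  assert (0 < (1 - w1 * w1 - w2 * w2) * (1 - X * X - Y * Y)) by (apply Rmult_lt_0_compat; lra).
  assert (0 <= (X + w1) * (X + w1) + (Y + w2) * (Y + w2)) by (apply Rplus_le_le_0_compat; apply Rle_0_sqr). lra.
Qed.

Lemma mob_disk w1 w2 X Y : w1 * w1 + w2 * w2 < 1 -> X * X + Y * Y < 1 ->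
  unit_disk (M1f w1 w2 X Y, M2f w1 w2 X Y).
Proof.
  intros Hw HX. assert (HQ := mob_QQ w1 w2 X Y Hw HX). assert (E := QQ_id w1 w2 X Y). unfold kk in E.
  assert (0 < (1 - w1 * w1 - w2 * w2) * (1 - X * X - Y * Y)) by (apply Rmult_lt_0_compat; lra).
  assert (Hs : M1f w1 w2 X Y ^ 2 + M2f w1 w2 X Y ^ 2 = ((X + w1) * (X + w1) + (Y + w2) * (Y + w2)) / QQ w1 w2 X Y).
  { unfold M1f, M2f. unfold QQ in *. field. lra. }
  unfold unit_disk, Cmod. simpl fst; simpl snd. rewrite Hs. rewrite <- sqrt_1. apply sqrt_lt_1_alt. split.
  - apply Rmult_le_pos. apply Rplus_le_le_0_compat; apply Rle_0_sqr. left. apply Rinv_0_lt_compat. exact HQ.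
  - apply Rmult_lt_reg_r with (QQ w1 w2 X Y). exact HQ. unfold Rdiv. rewrite Rmult_assoc, Rinv_l by lra. lra.
Qed.

Lemma hr_a c s r t : is_derive (fun r => r * ea c s t) r (ea c s t).
Proof. eapply is_derive_eq. apply is_derive_Rmult. apply is_derive_idR. apply is_derive_cst. cbv beta; req; ring. Qed.
Lemma hr_b c s r t : is_derive (fun r => r * eb c s t) r (eb c s t).
Proof. eapply is_derive_eq. apply is_derive_Rmult. apply is_derive_idR. apply is_derive_cst. cbv beta; req; ring. Qed.
Lemma ht_a c s r t : is_derive (fun t => r * ea c s t) t (- r * eb c s t).
Proof. eapply is_derive_eq. apply is_derive_Rmult. apply is_derive_cst. apply d_ea. cbv beta; req; ring. Qed.
Lemma ht_b c s r t : is_derive (fun t => r * eb c s t) t (r * ea c s t).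
Proof. eapply is_derive_eq. apply is_derive_Rmult. apply is_derive_cst. apply d_eb. cbv beta; req; ring. Qed.


Lemma dr_PM1 w1 w2 c s r t : QQ w1 w2 (r * ea c s t) (r * eb c s t) <> 0 ->
  is_derive (fun r => PM1 w1 w2 c s r t) r (PA1 w1 w2 c s r t).
Proof.
  intros H. unfold PM1, PA1. eapply is_derive_eq.
  apply (chain_expl (M1f w1 w2) (Md1 w1 w2) (fun x y => - Md2 w1 w2 x y) (fun r => r * ea c s t) (fun r => r * eb c s t)).
  apply diff_M1; auto. apply hr_a. apply hr_b. req; ring.
Qed.
Lemma dr_PM2 w1 w2 c s r t : QQ w1 w2 (r * ea c s t) (r * eb c s t) <> 0 ->
  is_derive (fun r => PM2 w1 w2 c s r t) r (PA2 w1 w2 c s r t).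
Proof.
  intros H. unfold PM2, PA2. eapply is_derive_eq.
  apply (chain_expl (M2f w1 w2) (Md2 w1 w2) (Md1 w1 w2) (fun r => r * ea c s t) (fun r => r * eb c s t)).
  apply diff_M2; auto. apply hr_a. apply hr_b. req; ring.
Qed.
Lemma dt_PM1 w1 w2 c s r t : QQ w1 w2 (r * ea c s t) (r * eb c s t) <> 0 ->
  is_derive (fun t => PM1 w1 w2 c s r t) t (- r * PA2 w1 w2 c s r t).
Proof.
  intros H. unfold PM1, PA2. eapply is_derive_eq.
  apply (chain_expl (M1f w1 w2) (Md1 w1 w2) (fun x y => - Md2 w1 w2 x y) (fun t => r * ea c s t) (fun t => r * eb c s t)).
  apply diff_M1; auto. apply ht_a. apply ht_b. req; ring.
Qed.
Lemma dt_PM2 w1 w2 c s r t : QQ w1 w2 (r * ea c s t) (r * eb c s t) <> 0 ->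
  is_derive (fun t => PM2 w1 w2 c s r t) t (r * PA1 w1 w2 c s r t).
Proof.
  intros H. unfold PM2, PA1. eapply is_derive_eq.
  apply (chain_expl (M2f w1 w2) (Md2 w1 w2) (Md1 w1 w2) (fun t => r * ea c s t) (fun t => r * eb c s t)).
  apply diff_M2; auto. apply ht_a. apply ht_b. req; ring.
Qed.

Lemma dr_PA1 w1 w2 c s r t : QQ w1 w2 (r * ea c s t) (r * eb c s t) <> 0 ->
  is_derive (fun r => PA1 w1 w2 c s r t) r (PB1 w1 w2 c s r t).
Proof.
  intros H. unfold PA1, PB1. eapply is_derive_eq.
  apply is_derive_Rminus; apply is_derive_Rmult.
  apply (chain_expl (Md1 w1 w2) (Mdd1 w1 w2) (fun x y => - Mdd2 w1 w2 x y) (fun r => r * ea c s t) (fun r => r * eb c s t)).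
  apply diff_Md1; auto. apply hr_a. apply hr_b. apply is_derive_cst.
  apply (chain_expl (Md2 w1 w2) (Mdd2 w1 w2) (Mdd1 w1 w2) (fun r => r * ea c s t) (fun r => r * eb c s t)).
  apply diff_Md2; auto. apply hr_a. apply hr_b. apply is_derive_cst.
  cbv beta; req; ring.
Qed.
Lemma dr_PA2 w1 w2 c s r t : QQ w1 w2 (r * ea c s t) (r * eb c s t) <> 0 ->
  is_derive (fun r => PA2 w1 w2 c s r t) r (PB2 w1 w2 c s r t).
Proof.
  intros H. unfold PA2, PB2. eapply is_derive_eq.
  apply is_derive_Rplus; apply is_derive_Rmult.
  apply (chain_expl (Md1 w1 w2) (Mdd1 w1 w2) (fun x y => - Mdd2 w1 w2 x y) (fun r => r * ea c s t) (fun r => r * eb c s t)).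
  apply diff_Md1; auto. apply hr_a. apply hr_b. apply is_derive_cst.
  apply (chain_expl (Md2 w1 w2) (Mdd2 w1 w2) (Mdd1 w1 w2) (fun r => r * ea c s t) (fun r => r * eb c s t)).
  apply diff_Md2; auto. apply hr_a. apply hr_b. apply is_derive_cst.
  cbv beta; req; ring.
Qed.
Lemma dt_PA2 w1 w2 c s r t : QQ w1 w2 (r * ea c s t) (r * eb c s t) <> 0 ->
  is_derive (fun t => - r * PA2 w1 w2 c s r t) t (-(r * r * PB1 w1 w2 c s r t + r * PA1 w1 w2 c s r t)).
Proof.
  intros H. unfold PA2, PB1, PA1. eapply is_derive_eq.
  apply is_derive_Rmult. apply is_derive_cst.
  apply is_derive_Rplus; apply is_derive_Rmult.
  apply (chain_expl (Md1 w1 w2) (Mdd1 w1 w2) (fun x y => - Mdd2 w1 w2 x y) (fun t => r * ea c s t) (fun t => r * eb c s t)).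
  apply diff_Md1; auto. apply ht_a. apply ht_b. apply d_eb.
  apply (chain_expl (Md2 w1 w2) (Mdd2 w1 w2) (Mdd1 w1 w2) (fun t => r * ea c s t) (fun t => r * eb c s t)).
  apply diff_Md2; auto. apply ht_a. apply ht_b. apply d_ea.
  cbv beta; req; ring.
Qed.
Lemma dt_PA1 w1 w2 c s r t : QQ w1 w2 (r * ea c s t) (r * eb c s t) <> 0 ->
  is_derive (fun t => r * PA1 w1 w2 c s r t) t (-(r * r * PB2 w1 w2 c s r t + r * PA2 w1 w2 c s r t)).
Proof.
  intros H. unfold PA2, PB2, PA1. eapply is_derive_eq.
  apply is_derive_Rmult. apply is_derive_cst.
  apply is_derive_Rminus; apply is_derive_Rmult.
  apply (chain_expl (Md1 w1 w2) (Mdd1 w1 w2) (fun x y => - Mdd2 w1 w2 x y) (fun t => r * ea c s t) (fun t => r * eb c s t)).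
  apply diff_Md1; auto. apply ht_a. apply ht_b. apply d_ea.
  apply (chain_expl (Md2 w1 w2) (Mdd2 w1 w2) (Mdd1 w1 w2) (fun t => r * ea c s t) (fun t => r * eb c s t)).
  apply diff_Md2; auto. apply ht_a. apply ht_b. apply d_eb.
  cbv beta; req; ring.
Qed.

Ltac hcont H :=
  match goal with
  | |- continuous (fun z => M1f ?w1 ?w2 (fst z) (snd z)) (?X, ?Y) => exact (cont_M1 w1 w2 X Y H)
  | |- continuous (fun z => M2f ?w1 ?w2 (fst z) (snd z)) (?X, ?Y) => exact (cont_M2 w1 w2 X Y H)
  | |- continuous (fun z => Md1 ?w1 ?w2 (fst z) (snd z)) (?X, ?Y) => exact (cont_Md1 w1 w2 X Y H)
  | |- continuous (fun z => Md2 ?w1 ?w2 (fst z) (snd z)) (?X, ?Y) => exact (cont_Md2 w1 w2 X Y H)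
  | |- continuous (fun z => Mdd1 ?w1 ?w2 (fst z) (snd z)) (?X, ?Y) => exact (cont_Mdd1 w1 w2 X Y H)
  | |- continuous (fun z => Mdd2 ?w1 ?w2 (fst z) (snd z)) (?X, ?Y) => exact (cont_Mdd2 w1 w2 X Y H)
  end.

Ltac ptac H :=
  repeat match goal with
  | |- cont2 (fun a b => ?h (a * ea ?c ?s b) (a * eb ?c ?s b)) _ _ =>
      apply (cont2_comp (fun z => h (fst z) (snd z)) (fun a b => a * ea c s b) (fun a b => a * eb c s b));
      [unfold ea; crat | unfold eb; crat | hcont H]
  | |- cont2 (fun a b => _ + _) _ _ => apply cont2_plus
  | |- cont2 (fun a b => _ - _) _ _ => apply cont2_minus
  | |- cont2 (fun a b => _ * _) _ _ => apply cont2_mult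
  | |- cont2 (fun a b => ea _ _ b) _ _ => unfold ea; crat
  | |- cont2 (fun a b => eb _ _ b) _ _ => unfold eb; crat
  | |- cont2 (fun a b => _) _ _ => apply cont2_const
  end.

Lemma cont_P w1 w2 c s r t : QQ w1 w2 (r * ea c s t) (r * eb c s t) <> 0 ->
  cont2 (PM1 w1 w2 c s) r t /\ cont2 (PM2 w1 w2 c s) r t /\ cont2 (PA1 w1 w2 c s) r t /\
  cont2 (PA2 w1 w2 c s) r t /\ cont2 (PB1 w1 w2 c s) r t /\ cont2 (PB2 w1 w2 c s) r t.
Proof.
  intros H. unfold PM1, PM2, PA1, PA2, PB1, PB2.
  repeat split; ptac H.
Qed.

Lemma zeta_QQ w1 w2 c s r t : w1 * w1 + w2 * w2 < 1 -> c * c + s * s = 1 -> -1 < r < 1 ->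
  0 < QQ w1 w2 (r * ea c s t) (r * eb c s t) /\
  unit_disk (M1f w1 w2 (r * ea c s t) (r * eb c s t), M2f w1 w2 (r * ea c s t) (r * eb c s t)).
Proof.
  intros Hw Hc Hr.
  assert (E := ea_eb c s t Hc).
  assert (Hz : (r * ea c s t) * (r * ea c s t) + (r * eb c s t) * (r * eb c s t) < 1).
  { replace ((r * ea c s t) * (r * ea c s t) + (r * eb c s t) * (r * eb c s t))
      with (r * r * (ea c s t * ea c s t + eb c s t * eb c s t)) by ring. rewrite E. nra. }
  split. apply mob_QQ; auto. apply mob_disk; auto.
Qed.

Lemma mob_polar_ok w1 w2 c s : w1 * w1 + w2 * w2 < 1 -> c * c + s * s = 1 ->
  polar_ok (PM1 w1 w2 c s) (PM2 w1 w2 c s) (PA1 w1 w2 c s) (PA2 w1 w2 c s) (PB1 w1 w2 c s) (PB2 w1 w2 c s).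
Proof.
  intros Hw Hc r t Hr.
  destruct (zeta_QQ w1 w2 c s r t Hw Hc Hr) as [HQ Hd].
  assert (H : QQ w1 w2 (r * ea c s t) (r * eb c s t) <> 0) by lra.
  destruct (cont_P w1 w2 c s r t H) as [K1 [K2 [K3 [K4 [K5 K6]]]]].
  split; [exact Hd|].
  split; [apply dr_PM1; exact H|].
  split; [apply dr_PM2; exact H|].
  split; [apply dr_PA1; exact H|].
  split; [apply dr_PA2; exact H|].
  split; [apply dt_PM1; exact H|].
  split; [apply dt_PM2; exact H|].
  split; [apply dt_PA2; exact H|].
  split; [apply dt_PA1; exact H|].
  do 6 (split; [assumption|]).
  unfold PM1, PM2, PA1, PA2, ea, eb. rewrite cos_2PI, sin_2PI, cos_0, sin_0.
  repeat split; reflexivity.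
Qed.

Lemma mob_h0 w1 w2 c s t :
  PM1 w1 w2 c s 0 t = w1 /\ PM2 w1 w2 c s 0 t = w2 /\
  PA1 w1 w2 c s 0 t = kk w1 w2 * (c * cos t - s * sin t) /\
  PA2 w1 w2 c s 0 t = kk w1 w2 * (s * cos t + c * sin t).
Proof.
  unfold PM1, PM2, PA1, PA2, ea, eb. rewrite !Rmult_0_l.
  assert (E1 : D1 w1 w2 0 0 = 1) by (unfold D1; ring).
  assert (E2 : D2 w1 w2 0 0 = 0) by (unfold D2; ring).
  assert (E3 : QQ w1 w2 0 0 = 1) by (unfold QQ; rewrite E1, E2; ring).
  unfold M1f, M2f, Md1, Md2. rewrite E1, E2, E3.
  repeat split; field.
Qed.

Lemma disk_sq w1 w2 : unit_disk (w1, w2) -> w1 * w1 + w2 * w2 < 1.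
Proof.
  unfold unit_disk, Cmod; simpl. intros H.
  assert (Hp : 0 <= w1 * (w1 * 1) + w2 * (w2 * 1)) by nra.
  assert (E := sqrt_sqrt _ Hp).
  assert (0 <= sqrt (w1 * (w1 * 1) + w2 * (w2 * 1))) by apply sqrt_pos. nra.
Qed.

Lemma grad_bound u w1 w2 : harmonic_on unit_disk u -> (forall z, unit_disk z -> Rabs (u z) <= 1) ->
  unit_disk (w1, w2) ->
  PI * (1 - w1 * w1 - w2 * w2) * sqrt (dx u (w1, w2) * dx u (w1, w2) + dy u (w1, w2) * dy u (w1, w2)) <= 4.
Proof.
  intros Hu Hb Hw. apply disk_sq in Hw.
  set (ux := dx u (w1, w2)). set (uy := dy u (w1, w2)).
  set (g := sqrt (ux * ux + uy * uy)).
  assert (Hg0 : 0 <= g) by apply sqrt_pos.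
  assert (Hgg : g * g = ux * ux + uy * uy) by (apply sqrt_sqrt; nra).
  destruct (Req_dec g 0) as [Z|NZ].
  { rewrite Z. rewrite Rmult_0_r. lra. }
  assert (Hc : (ux / g) * (ux / g) + (uy / g) * (uy / g) = 1).
  { replace ((ux / g) * (ux / g) + (uy / g) * (uy / g)) with ((ux * ux + uy * uy) / (g * g)) by (field; auto).
    rewrite <- Hgg. field. auto. }
  generalize (grad_core u _ _ _ _ _ _ w1 w2 (kk w1 w2) (ux / g) (uy / g) Hu Hb (mob_polar_ok w1 w2 _ _ Hw Hc)
    (mob_h0 w1 w2 (ux / g) (uy / g))).
  fold ux uy. unfold kk.
  replace (ux * (ux / g) + uy * (uy / g)) with ((ux * ux + uy * uy) / g) by (field; auto).
  rewrite <- Hgg. replace (g * g / g) with g by (field; auto). auto.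
Qed.

Lemma sq_disk x y : x * x + y * y < 1 -> unit_disk (x, y).
Proof.
  intros H. unfold unit_disk, Cmod; simpl. rewrite !Rmult_1_r. rewrite <- sqrt_1. apply sqrt_lt_1_alt.
  split; [apply Rplus_le_le_0_compat; apply Rle_0_sqr | exact H].
Qed.

Lemma Cmod_sq (x y : R) : Cmod (x, y) * Cmod (x, y) = x * x + y * y.
Proof. unfold Cmod; simpl. rewrite !Rmult_1_r. rewrite sqrt_sqrt. ring. apply Rplus_le_le_0_compat; apply Rle_0_sqr. Qed.

Lemma cs_ineq e1 e2 X Y : e1 * e1 + e2 * e2 = 1 -> e1 * X + e2 * Y <= Cmod (X, Y).
Proof.
  intros He. assert (Hm := Cmod_sq X Y). assert (H0 := Cmod_ge_0 (X, Y)).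
  destruct (Rle_dec (e1 * X + e2 * Y) 0). lra.
  apply Rsqr_incr_0_var; [|exact H0]. unfold Rsqr. rewrite Hm.
  assert (0 <= (e1 * Y - e2 * X) * (e1 * Y - e2 * X)) by apply Rle_0_sqr.
  assert (Id : (e1*X+e2*Y)*(e1*X+e2*Y) + (e1*Y-e2*X)*(e1*Y-e2*X) = (X*X+Y*Y)*(e1*e1+e2*e2)) by ring.
  rewrite He in Id. lra.
Qed.

Lemma Df_bound (ux uy vx vy z1 z2 : R) :
  let fz := ((ux + vy) / 2, (vx - uy) / 2) in
  let fzb := ((ux - vy) / 2, (vx + uy) / 2) in
  Cmod (ux * z1 + uy * z2, vx * z1 + vy * z2) <= (Cmod fz + Cmod fzb) * Cmod (z1, z2).
Proof.
  intros fz fzb.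
  replace (ux * z1 + uy * z2, vx * z1 + vy * z2) with (Cplus (Cmult fz (z1, z2)) (Cmult fzb (Cconj (z1, z2)))).
  2:{ unfold fz, fzb, Cplus, Cmult, Cconj; simpl. f_equal; field. }
  eapply Rle_trans. apply Cmod_triangle. rewrite !Cmod_mult, Cmod_conj. lra.
Qed.

Lemma grad_fz (ux uy vx vy : R) :
  let fz := ((ux + vy) / 2, (vx - uy) / 2) in
  let fzb := ((ux - vy) / 2, (vx + uy) / 2) in
  Cmod fz - Cmod fzb <= sqrt (ux * ux + uy * uy).
Proof.
  intros fz fzb.
  assert (E : fz = Cplus (ux, - uy) (Copp (Cconj fzb))).
  { unfold fz, fzb, Cplus, Copp, Cconj; simpl. f_equal; field. }
  rewrite E. eapply Rle_trans. apply Rplus_le_compat_r. apply Cmod_triangle.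
  rewrite Cmod_opp, Cmod_conj. unfold Cmod; simpl.
  replace (ux * (ux * 1) + - uy * (- uy * 1)) with (ux * ux + uy * uy) by ring. lra.
Qed.

Lemma deriv_psi (a rho t : R) : 0 <= rho < 1 -> 0 <= t <= 1 ->
  is_derive (fun t => a * artanh (t * rho)) t (a * rho / (1 - (t * rho) * (t * rho))).
Proof.
  intros Hr Ht. assert (H1 : 0 <= t * rho < 1) by nra.
  unfold artanh. eapply is_derive_eq. auto_derive.
  - repeat split; try lra. apply Rdiv_lt_0_compat; lra.
  - reflexivity.
  - req. field. repeat split; nra.
Qed.

Lemma part1 K f : 1 <= K -> HQR K unit_disk strip f -> f (0, 0) = (0, 0) ->
  forall z, unit_disk z -> Cmod (f z) <= 4 / PI * K * artanh (Cmod z).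
Proof.
  intros HK [Hs [Hhu [Hhv [C1u [C1v Hdil]]]]] H0 [z1 z2] Hz.
  assert (HPI := PI_RGT_0).
  set (rho := Cmod (z1, z2)).
  assert (Hrho : 0 <= rho < 1) by (split; [apply Cmod_ge_0 | exact Hz]).
  assert (Hrho2 : rho * rho = z1 * z1 + z2 * z2) by apply Cmod_sq.
  set (u := re_part f). set (v := im_part f).
  assert (Hb : forall w, unit_disk w -> Rabs (u w) <= 1).
  { intros w Hw. destruct (Hs w Hw). unfold u, re_part. apply Rabs_le; lra. }
  assert (Hart : 0 <= artanh rho).
  { unfold artanh. apply Rmult_le_pos; [|lra]. rewrite <- ln_1. apply ln_le. lra.
    apply (Rmult_le_reg_r (1 - rho)). lra. unfold Rdiv. rewrite Rmult_assoc, Rinv_l by lra. lra. }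
  destruct (Req_dec (Cmod (f (z1, z2))) 0) as [Z|NZ].
  { rewrite Z. apply Rmult_le_pos; auto. apply Rmult_le_pos; [|lra]. apply Rlt_le, Rdiv_lt_0_compat; lra. }
  set (F := Cmod (f (z1, z2))).
  assert (HF : 0 < F).
  { assert (HF0 : 0 <= F) by apply Cmod_ge_0. destruct HF0 as [HF0|HF0]; auto. exfalso; apply NZ; auto. }
  set (e1 := u (z1, z2) / F). set (e2 := v (z1, z2) / F).
  assert (He : e1 * e1 + e2 * e2 = 1).
  { unfold e1, e2. assert (E := Cmod_sq (u (z1, z2)) (v (z1, z2))).
    replace (u (z1, z2), v (z1, z2)) with (f (z1, z2)) in E by (unfold u, v, re_part, im_part; destruct (f (z1, z2)); reflexivity).
    fold F in E.
    replace (u (z1, z2) / F * (u (z1, z2) / F) + v (z1, z2) / F * (v (z1, z2) / F))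
      with ((u (z1, z2) * u (z1, z2) + v (z1, z2) * v (z1, z2)) / (F * F)) by (field; lra).
    rewrite <- E. field. lra. }
  set (h := fun t => e1 * u (t * z1, t * z2) + e2 * v (t * z1, t * z2)).
  set (psi := fun t => 4 / PI * K * artanh (t * rho)).
  assert (Hdisk : forall t, 0 <= t <= 1 -> unit_disk (t * z1, t * z2)).
  { intros t Ht. apply sq_disk. replace (t * z1 * (t * z1) + t * z2 * (t * z2)) with (t * t * (rho * rho)) by (rewrite Hrho2; ring).
    assert (t * t <= 1) by nra. assert (rho * rho < 1) by nra. assert (0 <= rho * rho) by nra. nra. }
  assert (Hdh : forall t, 0 <= t <= 1 -> is_derive h t
    (e1 * (dx u (t * z1, t * z2) * z1 + dy u (t * z1, t * z2) * z2) + e2 * (dx v (t * z1, t * z2) * z1 + dy v (t * z1, t * z2) * z2))).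
  { intros t Ht.
    assert (d1 : is_derive (fun t => t * z1) t z1).
    { eapply is_derive_eq. apply is_derive_Rmult. apply is_derive_idR. apply is_derive_cst. cbv beta; req; ring. }
    assert (d2 : is_derive (fun t => t * z2) t z2).
    { eapply is_derive_eq. apply is_derive_Rmult. apply is_derive_idR. apply is_derive_cst. cbv beta; req; ring. }
    unfold h. eapply is_derive_eq. apply is_derive_Rplus; apply is_derive_Rmult.
    apply is_derive_cst. apply (chain_curve u (fun t => t * z1) (fun t => t * z2) t z1 z2 C1u (Hdisk t Ht) d1 d2).
    apply is_derive_cst. apply (chain_curve v (fun t => t * z1) (fun t => t * z2) t z1 z2 C1v (Hdisk t Ht) d1 d2).
    cbv beta; req; ring. }
  assert (Hdpsi : forall t, 0 <= t <= 1 -> is_derive psi t (4 / PI * K * rho / (1 - (t * rho) * (t * rho)))).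
  { intros t Ht. unfold psi. apply deriv_psi; auto. }
  assert (Hle : forall t, 0 <= t <= 1 ->
    e1 * (dx u (t * z1, t * z2) * z1 + dy u (t * z1, t * z2) * z2) + e2 * (dx v (t * z1, t * z2) * z1 + dy v (t * z1, t * z2) * z2)
    <= 4 / PI * K * rho / (1 - (t * rho) * (t * rho))).
  { intros t Ht.
    set (ux := dx u (t * z1, t * z2)). set (uy := dy u (t * z1, t * z2)).
    set (vx := dx v (t * z1, t * z2)). set (vy := dy v (t * z1, t * z2)).
    assert (Ha := cs_ineq e1 e2 (ux * z1 + uy * z2) (vx * z1 + vy * z2) He).
    assert (Hb2 := Df_bound ux uy vx vy z1 z2). simpl in Hb2. fold rho in Hb2.
    assert (Hc := grad_fz ux uy vx vy). simpl in Hc.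
    destruct (Hdil _ (Hdisk t Ht)) as [Hd1 Hd2].
    change (f_z f (t * z1, t * z2)) with ((ux + vy) / 2, (vx - uy) / 2) in Hd1, Hd2.
    change (f_zbar f (t * z1, t * z2)) with ((ux - vy) / 2, (vx + uy) / 2) in Hd1, Hd2.
    set (A := Cmod ((ux + vy) / 2, (vx - uy) / 2)) in *.
    set (B := Cmod ((ux - vy) / 2, (vx + uy) / 2)) in *.
    assert (HAB : A + B <= K * (A - B)).
    { apply (Rmult_le_compat_r (A - B)) in Hd2; [|lra].
      unfold Rdiv in Hd2. rewrite Rmult_assoc, Rinv_l in Hd2 by lra. lra. }
    assert (Hg := grad_bound u (t * z1) (t * z2) Hhu Hb (Hdisk t Ht)). fold ux uy in Hg.
    set (G := sqrt (ux * ux + uy * uy)) in *.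
    set (D := 1 - t * rho * (t * rho)).
    assert (HD : 0 < D).
    { unfold D. assert (0 <= t * rho <= rho) by (split; nra). nra. }
    replace (1 - t * z1 * (t * z1) - t * z2 * (t * z2)) with D in Hg.
    2:{ unfold D. replace (t * rho * (t * rho)) with (t * t * (rho * rho)) by ring. rewrite Hrho2. ring. }
    assert (HG : G <= 4 / (PI * D)).
    { apply (Rmult_le_reg_l (PI * D)). apply Rmult_lt_0_compat; lra.
      replace (PI * D * (4 / (PI * D))) with 4 by (field; lra). lra. }
    assert (HA0 : 0 <= A - B) by lra.
    assert (H1 : A + B <= K * G) by (eapply Rle_trans; [exact HAB|]; apply Rmult_le_compat_l; lra).
    assert (H2 : (A + B) * rho <= K * G * rho) by (apply Rmult_le_compat_r; lra).
    assert (H3 : K * G * rho <= K * (4 / (PI * D)) * rho).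
    { apply Rmult_le_compat_r. lra. apply Rmult_le_compat_l; lra. }
    replace (4 / PI * K * rho / D) with (K * (4 / (PI * D)) * rho) by (field; split; lra).
    lra. }
  set (g := fun t => h t - psi t).
  destruct (MVT_gen g 0 1 (fun t => e1 * (dx u (t * z1, t * z2) * z1 + dy u (t * z1, t * z2) * z2) + e2 * (dx v (t * z1, t * z2) * z1 + dy v (t * z1, t * z2) * z2) - 4 / PI * K * rho / (1 - (t * rho) * (t * rho)))) as [c [Hc1 Hc2]].
  - intros x Hx. rewrite Rmin_left, Rmax_right in Hx by lra. unfold g. apply is_derive_Rminus.
    apply Hdh; lra. apply Hdpsi; lra.
  - intros x Hx. rewrite Rmin_left, Rmax_right in Hx by lra. apply continuity_pt_filterlim.
    apply (ex_derive_continuous (V := R_NormedModule)). eexists. unfold g. apply is_derive_Rminus.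
    apply Hdh; lra. apply Hdpsi; lra.
  - rewrite Rmin_left, Rmax_right in Hc1 by lra.
    assert (Hl := Hle c Hc1).
    assert (Hg1 : g 1 <= g 0).
    { cbv beta in Hc2. rewrite Rminus_0_r, Rmult_1_r in Hc2. lra. }
    unfold g, h, psi in Hg1. rewrite !Rmult_1_l, !Rmult_0_l in Hg1.
    assert (Eu0 : u (0, 0) = 0) by (unfold u, re_part; rewrite H0; reflexivity).
    assert (Ev0 : v (0, 0) = 0) by (unfold v, im_part; rewrite H0; reflexivity).
    assert (Ea0 : artanh 0 = 0) by (unfold artanh; replace ((1 + 0) / (1 - 0)) with 1 by field; rewrite ln_1; field).
    rewrite Eu0, Ev0, Ea0 in Hg1.
    assert (Eh : e1 * u (z1, z2) + e2 * v (z1, z2) = F).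
    { unfold e1, e2. assert (E := Cmod_sq (u (z1, z2)) (v (z1, z2))).
      replace (u (z1, z2), v (z1, z2)) with (f (z1, z2)) in E by (unfold u, v, re_part, im_part; destruct (f (z1, z2)); reflexivity).
      fold F in E. replace (u (z1, z2) / F * u (z1, z2) + v (z1, z2) / F * v (z1, z2))
        with ((u (z1, z2) * u (z1, z2) + v (z1, z2) * v (z1, z2)) / F) by (field; lra).
      rewrite <- E. field. lra. }
    fold F. rewrite Eh in Hg1. lra.
Qed.

Definition RX c s x y := c * x + s * y.
Definition RY c s x y := - s * x + c * y.
Definition sp c s x y := 2 / PI * atan (2 * RY c s x y / (1 - RX c s x y * RX c s x y - RY c s x y * RY c s x y)).
Definition sq c s x y := - (1 / PI) * ln (((1 + RX c s x y) * (1 + RX c s x y) + RY c s x y * RY c s x y) /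
                                        ((1 - RX c s x y) * (1 - RX c s x y) + RY c s x y * RY c s x y)).
Definition R1 c s x y := 1 - RX c s x y * RX c s x y + RY c s x y * RY c s x y.
Definition R2 c s x y := - 2 * RX c s x y * RY c s x y.
Definition SS c s x y := R1 c s x y * R1 c s x y + R2 c s x y * R2 c s x y.
Definition fa c s x y := 4 / PI * (- R2 c s x y) / SS c s x y.
Definition fb c s x y := 4 / PI * (- R1 c s x y) / SS c s x y.
Definition L1 c s x y := fa c s x y * c + fb c s x y * s.
Definition L2 c s x y := fb c s x y * c - fa c s x y * s.

Definition T1 c s x y := R1 c s x y * R1 c s x y - R2 c s x y * R2 c s x y.
Definition T2 c s x y := 2 * R1 c s x y * R2 c s x y.
Definition fa2 c s x y := 4 / PI * 2 * (RY c s x y * T1 c s x y - RX c s x y * T2 c s x y) / (SS c s x y * SS c s x y).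
Definition fb2 c s x y := 4 / PI * (-2) * (RX c s x y * T1 c s x y + RY c s x y * T2 c s x y) / (SS c s x y * SS c s x y).
Definition N1 c s x y := fa2 c s x y * (c * c - s * s) + fb2 c s x y * (2 * c * s).
Definition N2 c s x y := fb2 c s x y * (c * c - s * s) - fa2 c s x y * (2 * c * s).

Definition good c s x y := 1 - RX c s x y * RX c s x y - RY c s x y * RY c s x y <> 0 /\ SS c s x y <> 0 /\
  0 < (1 + RX c s x y) * (1 + RX c s x y) + RY c s x y * RY c s x y /\
  0 < (1 - RX c s x y) * (1 - RX c s x y) + RY c s x y * RY c s x y.

Ltac sh_tac := intros [H1 [H2 [H3 H4]]];
  unfold sp, sq, L1, L2, N1, N2, fa, fb, fa2, fb2, T1, T2, SS, R1, R2 in *; unfold RX, RY in *;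
  assert (HPI := PI_RGT_0);
  auto_derive; [ repeat split; try lra; try (apply Rdiv_lt_0_compat; lra);
                 try (repeat apply Rmult_integral_contrapositive_currified; auto; lra); try (intro; apply H1; lra)
               | req; field; repeat split; try lra; try (repeat apply Rmult_integral_contrapositive_currified; auto; lra);
                 try (intro; apply H1; lra) ].

Lemma dx_sp c s x y : good c s x y -> is_derive (fun x => sp c s x y) x (L1 c s x y).
Proof. sh_tac. Qed.
Lemma dy_sp c s x y : good c s x y -> is_derive (fun y => sp c s x y) y (- L2 c s x y).
Proof. sh_tac. Qed.
Lemma dx_sq c s x y : good c s x y -> is_derive (fun x => sq c s x y) x (L2 c s x y).
Proof. sh_tac. Qed.
Lemma dy_sq c s x y : good c s x y -> is_derive (fun y => sq c s x y) y (L1 c s x y).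
Proof. sh_tac. Qed.
Lemma dx_L1 c s x y : good c s x y -> is_derive (fun x => L1 c s x y) x (N1 c s x y).
Proof. sh_tac. Qed.
Lemma dy_L1 c s x y : good c s x y -> is_derive (fun y => L1 c s x y) y (- N2 c s x y).
Proof. sh_tac. Qed.
Lemma dx_L2 c s x y : good c s x y -> is_derive (fun x => L2 c s x y) x (N2 c s x y).
Proof. sh_tac. Qed.
Lemma dy_L2 c s x y : good c s x y -> is_derive (fun y => L2 c s x y) y (N1 c s x y).
Proof. sh_tac. Qed.

Definition cmp (H : R -> R -> R) : C -> R := fun p => H (fst p) (snd p).

Lemma C1_expl (H Hx Hy : R -> R -> R) :
  (forall x y, unit_disk (x, y) -> is_derive (fun x => H x y) x (Hx x y) /\ is_derive (fun y => H x y) y (Hy x y)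
     /\ cont2 H x y /\ cont2 Hx x y /\ cont2 Hy x y) ->
  C1_on unit_disk (cmp H) /\ (forall p, unit_disk p -> dx (cmp H) p = cmp Hx p /\ dy (cmp H) p = cmp Hy p).
Proof.
  intros HH.
  assert (Edx : forall p, unit_disk p -> dx (cmp H) p = cmp Hx p /\ dy (cmp H) p = cmp Hy p).
  { intros [x y] Hp. destruct (HH x y Hp) as [D1 [D2 _]]. unfold dx, dy, cmp; simpl.
    split; apply is_derive_unique; auto. }
  split; auto.
  intros [x y] Hp. destruct (HH x y Hp) as [D1 [D2 [K1 [K2 K3]]]].
  split; [eexists; exact D1|]. split; [eexists; exact D2|].
  split; [exact K1|].
  assert (Hl := disk_open x y Hp).
  split.
  - apply continuous_ext_loc with (g := cmp Hx).
    + eapply filter_imp; [|exact Hl]. intros q Hq. symmetry. apply Edx; auto.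
    + exact K2.
  - apply continuous_ext_loc with (g := cmp Hy).
    + eapply filter_imp; [|exact Hl]. intros q Hq. symmetry. apply Edx; auto.
    + exact K3.
Qed.

Lemma C1_ext (h1 h2 : C -> R) :
  (forall p, unit_disk p -> h1 p = h2 p) -> C1_on unit_disk h2 ->
  C1_on unit_disk h1 /\ (forall p, unit_disk p -> dx h1 p = dx h2 p /\ dy h1 p = dy h2 p).
Proof.
  intros E HC.
  assert (Ed : forall p, unit_disk p -> dx h1 p = dx h2 p /\ dy h1 p = dy h2 p).
  { intros [x y] Hp. destruct (disk_open2 x y Hp) as [d Hd]. unfold dx, dy; simpl. split.
    - apply Derive_ext_loc. exists d. intros t Ht. apply E. apply Hd. exact Ht.
      rewrite Rminus_diag, Rabs_R0. apply cond_pos.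
    - apply Derive_ext_loc. exists d. intros t Ht. apply E. apply Hd.
      rewrite Rminus_diag, Rabs_R0. apply cond_pos. exact Ht. }
  split; auto.
  intros [x y] Hp. destruct (HC (x, y) Hp) as [D1 [D2 [K1 [K2 K3]]]]. simpl in *.
  destruct (disk_open2 x y Hp) as [d Hd].
  assert (Hl := disk_open x y Hp).
  split.
  { apply ex_derive_ext_loc with (f := fun t => h2 (t, y)); auto.
    exists d. intros t Ht. symmetry. apply E. apply Hd. exact Ht. rewrite Rminus_diag, Rabs_R0. apply cond_pos. }
  split.
  { apply ex_derive_ext_loc with (f := fun t => h2 (x, t)); auto.
    exists d. intros t Ht. symmetry. apply E. apply Hd. rewrite Rminus_diag, Rabs_R0. apply cond_pos. exact Ht. }
  split; [|split].
  - apply continuous_ext_loc with (g := h2); auto.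
    eapply filter_imp; [|exact Hl]. intros q Hq. symmetry. apply E; auto.
  - apply continuous_ext_loc with (g := dx h2); auto.
    eapply filter_imp; [|exact Hl]. intros q Hq. symmetry. apply Ed; auto.
  - apply continuous_ext_loc with (g := dy h2); auto.
    eapply filter_imp; [|exact Hl]. intros q Hq. symmetry. apply Ed; auto.
Qed.

Lemma disk_sq' w1 w2 : unit_disk (w1, w2) -> w1 * w1 + w2 * w2 < 1.
Proof.
  unfold unit_disk, Cmod; simpl. intros H.
  assert (Hp : 0 <= w1 * (w1 * 1) + w2 * (w2 * 1)) by nra.
  assert (E := sqrt_sqrt _ Hp).
  assert (0 <= sqrt (w1 * (w1 * 1) + w2 * (w2 * 1))) by apply sqrt_pos. nra.
Qed.

Lemma SS_id c s x y : SS c s x y = ((1 - RX c s x y) * (1 - RX c s x y) + RY c s x y * RY c s x y) *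
   ((1 + RX c s x y) * (1 + RX c s x y) + RY c s x y * RY c s x y).
Proof. unfold SS, R1, R2. ring. Qed.

Lemma good_disk c s x y : c * c + s * s = 1 -> unit_disk (x, y) -> good c s x y.
Proof.
  intros Hc Hd. apply disk_sq' in Hd.
  assert (E : RX c s x y * RX c s x y + RY c s x y * RY c s x y = (c * c + s * s) * (x * x + y * y))
    by (unfold RX, RY; ring).
  rewrite Hc, Rmult_1_l in E.
  set (X := RX c s x y) in *. set (Y := RY c s x y) in *.
  assert (HX : X * X < 1) by nra.
  assert (HX1 : -1 < X < 1) by nra.
  assert (A1 : 0 < (1 + X) * (1 + X) + Y * Y) by nra.
  assert (A2 : 0 < (1 - X) * (1 - X) + Y * Y) by nra.
  unfold good. fold X Y. split; [lra|]. split; [|split; auto].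
  rewrite SS_id. fold X Y. apply Rgt_not_eq. apply Rmult_lt_0_compat; auto.
Qed.

Ltac crat2 := unfold Rdiv; repeat match goal with
  | |- cont2 (fun a b => _ + _) _ _ => apply cont2_plus
  | |- cont2 (fun a b => _ - _) _ _ => apply cont2_minus
  | |- cont2 (fun a b => _ * _) _ _ => apply cont2_mult
  | |- cont2 (fun a b => - _) _ _ => apply cont2_opp
  | |- cont2 (fun a b => / _) _ _ => apply cont2_inv
  | |- cont2 (fun a b => atan (@?F a b)) ?r ?t => apply (cont2_f1 atan F r t); [|apply continuous_atan]
  | |- cont2 (fun a b => ln (@?F a b)) ?r ?t => apply (cont2_f1 ln F r t); [|apply continuous_ln]
  | |- cont2 (fun a b => a) _ _ => apply cont2_fst
  | |- cont2 (fun a b => b) _ _ => apply cont2_snd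
  | |- cont2 (fun a b => _) _ _ => apply cont2_const
  end.

Ltac gside := intros [H1 [H2 [H3 H4]]]; assert (HPI := PI_RGT_0);
  unfold sp, sq, L1, L2, N1, N2, fa, fb, fa2, fb2, T1, T2, SS, R1, R2 in *; unfold RX, RY in *;
  crat2; try lra; try (apply Rgt_not_eq; lra); try (apply Rmult_integral_contrapositive_currified; auto);
  try (apply Rdiv_lt_0_compat; lra); try (intro; apply H1; lra).

Lemma cont_sp c s x y : good c s x y -> cont2 (sp c s) x y.
Proof. gside. Qed.
Lemma cont_sq c s x y : good c s x y -> cont2 (sq c s) x y.
Proof. gside. Qed.
Lemma cont_L1 c s x y : good c s x y -> cont2 (L1 c s) x y.
Proof. gside. Qed.
Lemma cont_L2 c s x y : good c s x y -> cont2 (L2 c s) x y.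
Proof. gside. Qed.
Lemma cont_N1 c s x y : good c s x y -> cont2 (N1 c s) x y.
Proof. gside. Qed.
Lemma cont_N2 c s x y : good c s x y -> cont2 (N2 c s) x y.
Proof. gside. Qed.

Lemma harm_expl (H Hx Hy Hxx Hxy Hyx Hyy : R -> R -> R) :
  (forall x y, unit_disk (x, y) ->
     is_derive (fun x => H x y) x (Hx x y) /\ is_derive (fun y => H x y) y (Hy x y) /\
     is_derive (fun x => Hx x y) x (Hxx x y) /\ is_derive (fun y => Hx x y) y (Hxy x y) /\
     is_derive (fun x => Hy x y) x (Hyx x y) /\ is_derive (fun y => Hy x y) y (Hyy x y) /\
     cont2 H x y /\ cont2 Hx x y /\ cont2 Hy x y /\ cont2 Hxx x y /\ cont2 Hxy x y /\
     cont2 Hyx x y /\ cont2 Hyy x y /\ Hxx x y + Hyy x y = 0) ->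
  harmonic_on unit_disk (cmp H) /\ C1_on unit_disk (cmp H) /\
  (forall p, unit_disk p -> dx (cmp H) p = cmp Hx p /\ dy (cmp H) p = cmp Hy p).
Proof.
  intros HH.
  destruct (C1_expl H Hx Hy) as [C0 E0].
  { intros x y Hd. destruct (HH x y Hd) as [a1 [a2 [a3 [a4 [a5 [a6 [k1 [k2 [k3 _]]]]]]]]]. auto 10. }
  destruct (C1_expl Hx Hxx Hxy) as [Cx Ex].
  { intros x y Hd. destruct (HH x y Hd) as [a1 [a2 [a3 [a4 [a5 [a6 [k1 [k2 [k3 [k4 [k5 _]]]]]]]]]]]. auto 10. }
  destruct (C1_expl Hy Hyx Hyy) as [Cy Ey].
  { intros x y Hd. destruct (HH x y Hd) as [a1 [a2 [a3 [a4 [a5 [a6 [k1 [k2 [k3 [k4 [k5 [k6 [k7 _]]]]]]]]]]]]]. auto 10. }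
  destruct (C1_ext (dx (cmp H)) (cmp Hx)) as [Cx' Ex']; [intros p Hp; apply E0; auto | exact Cx |].
  destruct (C1_ext (dy (cmp H)) (cmp Hy)) as [Cy' Ey']; [intros p Hp; apply E0; auto | exact Cy |].
  split; [|split; auto].
  split. split; [exact C0|split; assumption].
  intros [x y] Hp.
  destruct (Ex' _ Hp) as [F1 _]. destruct (Ey' _ Hp) as [_ F2].
  rewrite F1, F2. destruct (Ex _ Hp) as [G1 _]. destruct (Ey _ Hp) as [_ G2]. rewrite G1, G2.
  unfold cmp; simpl. destruct (HH x y Hp) as [_ [_ [_ [_ [_ [_ [_ [_ [_ [_ [_ [_ [_ L]]]]]]]]]]]]]. exact L.
Qed.

Lemma is_derive_neg (f : R -> R) x l : is_derive f x l -> is_derive (fun t => - f t) x (- l).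
Proof. intros H. apply (is_derive_opp f); auto. Qed.
Lemma is_derive_sc (f : R -> R) K x l : is_derive f x l -> is_derive (fun t => K * f t) x (K * l).
Proof. intros H. eapply is_derive_eq. apply is_derive_Rmult. apply is_derive_cst. exact H. cbv beta; req; ring. Qed.

Lemma harm_sp c s : c * c + s * s = 1 ->
  harmonic_on unit_disk (cmp (sp c s)) /\ C1_on unit_disk (cmp (sp c s)) /\
  (forall p, unit_disk p -> dx (cmp (sp c s)) p = cmp (L1 c s) p /\ dy (cmp (sp c s)) p = cmp (fun x y => - L2 c s x y) p).
Proof.
  intros Hc. apply (harm_expl (sp c s) (L1 c s) (fun x y => - L2 c s x y) (N1 c s) (fun x y => - N2 c s x y)
    (fun x y => - N2 c s x y) (fun x y => - N1 c s x y)).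
  intros x y Hd. assert (G := good_disk c s x y Hc Hd).
  refine (conj _ (conj _ (conj _ (conj _ (conj _ (conj _ (conj _ (conj _ (conj _ (conj _ (conj _ (conj _ (conj _ _))))))))))))).
  - apply dx_sp; auto.
  - apply dy_sp; auto.
  - apply dx_L1; auto.
  - apply dy_L1; auto.
  - apply (is_derive_neg (fun x => L2 c s x y)). apply dx_L2; auto.
  - apply (is_derive_neg (fun y => L2 c s x y)). apply dy_L2; auto.
  - apply cont_sp; auto.
  - apply cont_L1; auto.
  - apply cont2_opp. apply cont_L2; auto.
  - apply cont_N1; auto.
  - apply cont2_opp. apply cont_N2; auto.
  - apply cont2_opp. apply cont_N2; auto.
  - apply cont2_opp. apply cont_N1; auto.
  - ring.
Qed.

Lemma harm_sq K c s : c * c + s * s = 1 ->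
  harmonic_on unit_disk (cmp (fun x y => K * sq c s x y)) /\ C1_on unit_disk (cmp (fun x y => K * sq c s x y)) /\
  (forall p, unit_disk p -> dx (cmp (fun x y => K * sq c s x y)) p = cmp (fun x y => K * L2 c s x y) p /\
                            dy (cmp (fun x y => K * sq c s x y)) p = cmp (fun x y => K * L1 c s x y) p).
Proof.
  intros Hc. apply (harm_expl (fun x y => K * sq c s x y) (fun x y => K * L2 c s x y) (fun x y => K * L1 c s x y)
    (fun x y => K * N2 c s x y) (fun x y => K * N1 c s x y) (fun x y => K * N1 c s x y) (fun x y => K * - N2 c s x y)).
  intros x y Hd. assert (G := good_disk c s x y Hc Hd).
  refine (conj _ (conj _ (conj _ (conj _ (conj _ (conj _ (conj _ (conj _ (conj _ (conj _ (conj _ (conj _ (conj _ _))))))))))))).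
  - apply (is_derive_sc (fun x => sq c s x y)). apply dx_sq; auto.
  - apply (is_derive_sc (fun y => sq c s x y)). apply dy_sq; auto.
  - apply (is_derive_sc (fun x => L2 c s x y)). apply dx_L2; auto.
  - apply (is_derive_sc (fun y => L2 c s x y)). apply dy_L2; auto.
  - apply (is_derive_sc (fun x => L1 c s x y)). apply dx_L1; auto.
  - apply (is_derive_sc (fun y => L1 c s x y)). apply dy_L1; auto.
  - apply cont2_mult. apply cont2_const. apply cont_sq; auto.
  - apply cont2_mult. apply cont2_const. apply cont_L2; auto.
  - apply cont2_mult. apply cont2_const. apply cont_L1; auto.
  - apply cont2_mult. apply cont2_const. apply cont_N2; auto.
  - apply cont2_mult. apply cont2_const. apply cont_N1; auto.
  - apply cont2_mult. apply cont2_const. apply cont_N1; auto.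
  - apply cont2_mult. apply cont2_const. apply cont2_opp. apply cont_N2; auto.
  - ring.
Qed.

Lemma Cmod_scal a x y : Cmod (a * x, a * y) = Rabs a * Cmod (x, y).
Proof.
  replace (a * x, a * y) with (Cmult (a, 0) (x, y)) by (unfold Cmult; simpl; f_equal; ring).
  rewrite Cmod_mult. f_equal. apply (Cmod_R a).
Qed.

Lemma Cmod_0r b : Cmod (0, b) = Rabs b.
Proof. replace (0, b) with (Cmult (b, 0) (0, 1)) by (unfold Cmult; simpl; f_equal; ring).
  rewrite Cmod_mult. replace (Cmod (b, 0)) with (Rabs b) by (symmetry; apply (Cmod_R b)). replace (Cmod (0, 1)) with 1. ring.
  unfold Cmod; simpl. replace (0 * (0 * 1) + 1 * (1 * 1)) with 1 by ring. rewrite sqrt_1; auto.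
Qed.

Lemma L_pos c s x y : c * c + s * s = 1 -> good c s x y -> 0 < Cmod (L1 c s x y, L2 c s x y).
Proof.
  intros Hc [H1 [H2 [H3 H4]]]. assert (HPI := PI_RGT_0).
  assert (E1 : L1 c s x y * L1 c s x y + L2 c s x y * L2 c s x y = (fa c s x y * fa c s x y + fb c s x y * fb c s x y) * (c * c + s * s))
    by (unfold L1, L2; ring).
  assert (E2 : fa c s x y * fa c s x y + fb c s x y * fb c s x y = (4 / PI) * (4 / PI) / SS c s x y).
  { unfold fa, fb. unfold SS in *. field. split; lra. }
  rewrite Hc, Rmult_1_r, E2 in E1.
  assert (HS : 0 < SS c s x y).
  { rewrite SS_id. apply Rmult_lt_0_compat; auto. }
  assert (HL : 0 < L1 c s x y * L1 c s x y + L2 c s x y * L2 c s x y).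
  { rewrite E1. apply Rdiv_lt_0_compat; auto. apply Rmult_lt_0_compat; apply Rdiv_lt_0_compat; lra. }
  unfold Cmod; simpl. apply sqrt_lt_R0. lra.
Qed.

Lemma rot_exists x0 y0 : exists c s, c * c + s * s = 1 /\ c * x0 + s * y0 = Cmod (x0, y0) /\ - s * x0 + c * y0 = 0.
Proof.
  set (r := Cmod (x0, y0)).
  assert (Hr2 : r * r = x0 * x0 + y0 * y0).
  { unfold r, Cmod; simpl. rewrite sqrt_sqrt. ring. nra. }
  assert (Hr0 : 0 <= r) by apply Cmod_ge_0.
  destruct (Req_dec r 0) as [Z|NZ].
  - exists 1, 0. rewrite Z in Hr2. assert (x0 = 0) by nra. assert (y0 = 0) by nra. subst.
    split; [ring|split; [|ring]]. fold r. rewrite Z. ring.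
  - exists (x0 / r), (y0 / r). split; [|split].
    + replace (x0 / r * (x0 / r) + y0 / r * (y0 / r)) with ((x0 * x0 + y0 * y0) / (r * r)) by (field; auto).
      rewrite <- Hr2. field. auto.
    + fold r. replace (x0 / r * x0 + y0 / r * y0) with ((x0 * x0 + y0 * y0) / r) by (field; auto).
      rewrite <- Hr2. field. auto.
    + field. auto.
Qed.

Definition gsh (K c s : R) : C -> C := fun p => (sp c s (fst p) (snd p), K * sq c s (fst p) (snd p)).

Lemma part2 K : 1 <= K -> forall z : C, unit_disk z ->
  exists g : C -> C, HQR K unit_disk strip g /\ g (0, 0) = (0, 0) /\ Cmod (g z) = 4 / PI * K * artanh (Cmod z).
Proof.
  intros HK [x0 y0] Hz. assert (HPI := PI_RGT_0).
  destruct (rot_exists x0 y0) as [c [s [Hc [HX HY]]]].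
  exists (gsh K c s).
  destruct (harm_sp c s Hc) as [Hh1 [C1 E1]].
  destruct (harm_sq K c s Hc) as [Hh2 [C2 E2]].
  split; [|split].
  - split; [|split; [|split; [|split; [|split]]]].
    + intros [x y] Hd. unfold strip, gsh, sp; simpl.
      generalize (atan_bound (2 * RY c s x y / (1 - RX c s x y * RX c s x y - RY c s x y * RY c s x y))).
      intros [A B]. split.
      * apply (Rmult_lt_reg_l (PI / 2)). lra. replace (PI / 2 * (2 / PI * atan (2 * RY c s x y / (1 - RX c s x y * RX c s x y - RY c s x y * RY c s x y)))) with (atan (2 * RY c s x y / (1 - RX c s x y * RX c s x y - RY c s x y * RY c s x y))) by (field; lra). lra.
      * apply (Rmult_lt_reg_l (PI / 2)). lra. replace (PI / 2 * (2 / PI * atan (2 * RY c s x y / (1 - RX c s x y * RX c s x y - RY c s x y * RY c s x y)))) with (atan (2 * RY c s x y / (1 - RX c s x y * RX c s x y - RY c s x y * RY c s x y))) by (field; lra). lra.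
    + exact Hh1.
    + exact Hh2.
    + exact C1.
    + exact C2.
    + intros p Hp.
      destruct (E1 p Hp) as [Ex Ey]. destruct (E2 p Hp) as [Fx Fy].
      unfold f_z, f_zbar.
      change (re_part (gsh K c s)) with (cmp (sp c s)).
      change (im_part (gsh K c s)) with (cmp (fun x y => K * sq c s x y)).
      rewrite Ex, Ey, Fx, Fy. destruct p as [x y]. unfold cmp; simpl.
      assert (G := good_disk c s x y Hc Hp).
      assert (Hl := L_pos c s x y Hc G).
      set (l1 := L1 c s x y) in *. set (l2 := L2 c s x y) in *.
      replace ((l1 + K * l1) / 2, (K * l2 - - l2) / 2) with ((1 + K) / 2 * l1, (1 + K) / 2 * l2) by (f_equal; field).
      replace ((l1 - K * l1) / 2, (K * l2 + - l2) / 2) with ((K - 1) / 2 * (- l1), (K - 1) / 2 * l2) by (f_equal; field).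
      rewrite !Cmod_scal. rewrite (Rabs_pos_eq ((1 + K) / 2)) by lra. rewrite (Rabs_pos_eq ((K - 1) / 2)) by lra.
      replace (Cmod (- l1, l2)) with (Cmod (l1, l2)) by (unfold Cmod; simpl; f_equal; ring).
      split. nra.
      replace (((1 + K) / 2 * Cmod (l1, l2) + (K - 1) / 2 * Cmod (l1, l2)) / ((1 + K) / 2 * Cmod (l1, l2) - (K - 1) / 2 * Cmod (l1, l2)))
        with K by (field; lra). lra.
  - unfold gsh, sp, sq, RX, RY; simpl.
    replace (c * 0 + s * 0) with 0 by ring. replace (- s * 0 + c * 0) with 0 by ring.
    replace (2 * 0 / (1 - 0 * 0 - 0 * 0)) with 0 by field. rewrite atan_0.
    replace (((1 + 0) * (1 + 0) + 0 * 0) / ((1 - 0) * (1 - 0) + 0 * 0)) with 1 by field. rewrite ln_1.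
    f_equal; ring.
  - unfold gsh; simpl. unfold sp, sq.
    replace (RX c s x0 y0) with (Cmod (x0, y0)) by (unfold RX; symmetry; exact HX).
    replace (RY c s x0 y0) with 0 by (unfold RY; symmetry; exact HY).
    set (r := Cmod (x0, y0)) in *.
    assert (Hr : 0 <= r < 1) by (split; [apply Cmod_ge_0 | exact Hz]).
    replace (2 * 0 / (1 - r * r - 0 * 0)) with 0 by (field; nra). rewrite atan_0.
    replace (2 / PI * 0) with 0 by ring. rewrite Cmod_0r.
    replace (((1 + r) * (1 + r) + 0 * 0) / ((1 - r) * (1 - r) + 0 * 0)) with (((1 + r) / (1 - r)) * ((1 + r) / (1 - r))) by (field; lra).
    assert (Hq : 0 < (1 + r) / (1 - r)) by (apply Rdiv_lt_0_compat; lra).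
    rewrite ln_mult by auto.
    assert (Hl : 0 <= ln ((1 + r) / (1 - r))).
    { rewrite <- ln_1. apply ln_le. lra. apply (Rmult_le_reg_r (1 - r)). lra.
      unfold Rdiv. rewrite Rmult_assoc, Rinv_l by lra. lra. }
    unfold artanh.
    replace (K * (- (1 / PI) * (ln ((1 + r) / (1 - r)) + ln ((1 + r) / (1 - r)))))
      with (- (4 / PI * K * (ln ((1 + r) / (1 - r)) / 2))) by (field; lra).
    rewrite Rabs_Ropp. apply Rabs_pos_eq.
    apply Rmult_le_pos; [|lra]. apply Rmult_le_pos; [|lra]. apply Rlt_le, Rdiv_lt_0_compat; lra.
Qed.


Theorem theorem7 (K : R) (HK : 1 <= K) :
  (forall f : C -> C, HQR K unit_disk strip f -> f (0, 0) = (0, 0) ->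
     forall z : C, unit_disk z -> Cmod (f z) <= 4 / PI * K * artanh (Cmod z)) /\
  (forall z : C, unit_disk z ->
     exists g : C -> C, HQR K unit_disk strip g /\ g (0, 0) = (0, 0) /\
       Cmod (g z) = 4 / PI * K * artanh (Cmod z)).
Proof.
  split.
  - intros f Hf H0 z Hz. exact (part1 K f HK Hf H0 z Hz).
  - exact (part2 K HK).
Qed.
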